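(* Fix $s\in(0,2]$. As $d\to\infty$, $$\bar{\sigma}_0^2(s,d)=\frac{2}{d}+\frac{5(2-s)}{2d^2}+o\Big(\frac1{d^2}\Big),\qquad \bar{\sigma}_0(s,d)=\frac{\sqrt2}{\sqrt d}+\frac{5\sqrt2(2-s)}{8d\sqrt d}+o\Big(\frac1{d\sqrt d}\Big).$$
   Context: For integers $d\ge1$ and real $s>0$, let $I_0(s,d)=2^{s/2}\sum_{n=1}^{d}\binom{d}{n}2^{-d}\,\Gamma(n/2+s/2)/\Gamma(n/2)$ and $\bar{\sigma}_0(s,d)=I_0(s,d)^{-1/s}$. (Equivalently $I_0(s,d)=\mathbb{E}\|\max(Z,0)\|^s$ for $Z\sim\mathcal N(0,I_d)$, the maximum taken componentwise, and $\bar\sigma_0(s,d)$ is the weight standard deviation at which a zero-bias ReLU network of width $d$ with i.i.d. $\mathcal N(0,\sigma^2)$ weights preserves the $s$-th moment of the norm of layer outputs.) *)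

(* Defs.v *)
From Stdlib Require Import Reals.
From Coquelicot Require Import Coquelicot.
Open Scope R_scope.

Definition Gamma (x : R) : R :=
  RInt_gen (fun t => Rpower t (x - 1) * exp (- t))
           (at_right 0) (Rbar_locally p_infty).

Definition I0 (s : R) (d : nat) : R :=
  Rpower 2 (s / 2) *
  sum_n_m (fun n : nat =>
             Binomial.C d n / 2 ^ d * (Gamma (INR n / 2 + s / 2) / Gamma (INR n / 2)))
          1 d.

Definition sigma0 (s : R) (d : nat) : R := Rpower (I0 s d) (- (1 / s)).

(* Main.v *)
Require Import Defs.
From Stdlib Require Import Reals Lra Psatz ZArith.
From Coquelicot Require Import Coquelicot.
Open Scope R_scope.

Lemma ball_R_iff (x e y : R) : ball x e y <-> Rabs (y - x) < e.
Proof. reflexivity. Qed.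

Lemma gen_pos (f : R -> R) (M : R) :
  (forall t, 0 < t -> continuous f t) ->
  (forall t, 0 < t -> 0 <= f t) ->
  (forall a b, 0 < a -> a <= b -> RInt f a b <= M) ->
  exists l, is_RInt_gen f (at_right 0) (Rbar_locally p_infty) l /\
            (forall a b, 0 < a -> a <= b -> RInt f a b <= l).
Proof.
  intros Hc Hp HM.
  assert (Hex : forall a b, 0 < a -> a <= b -> ex_RInt f a b).
  { intros a b Ha Hab. apply (ex_RInt_continuous (V:=R_CompleteNormedModule)). intros z Hz.
    apply Hc. rewrite Rmin_left in Hz by lra. lra. }
  set (E := fun v => exists a b, 0 < a /\ a <= b /\ v = RInt f a b).
  assert (Hb : bound E). { exists M. intros v [a [b [Ha [Hab ->]]]]. now apply HM. }
  assert (Hne : exists v, E v). { exists (RInt f 1 1). exists 1, 1. repeat split; lra. }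
  destruct (completeness E Hb Hne) as [l [Hub Hlub]].
  exists l. split.
  2:{ intros a b Ha Hab. apply Hub. exists a, b. auto. }
  apply filterlimi_lim_ext_loc with (f := fun ab => RInt f (fst ab) (snd ab)).
  - exists (fun a => 0 < a < 1) (fun b => 1 < b).
    + exists (mkposreal 1 Rlt_0_1). intros y Hy Hy0. split; [exact Hy0|].
      assert (Hy' : Rabs (y - 0) < 1) by exact Hy.
      apply Rabs_def2 in Hy'. lra.
    + exists 1. auto.
    + intros a b Ha Hb'. simpl. apply (RInt_correct (V:=R_CompleteNormedModule)). apply Hex; lra.
  - intros P [eps HP].
    assert (Hx : exists a0 b0, 0 < a0 /\ a0 <= b0 /\ l - eps < RInt f a0 b0).
    { destruct (Rlt_or_le (l - eps) l) as [H|H].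
      2:{ destruct eps; simpl in *; lra. }
      apply Classical_Prop.NNPP. intro Hn.
      assert (Hu : is_upper_bound E (l - eps)).
      { intros v [a [b [Ha [Hab ->]]]].
        destruct (Rle_or_lt (RInt f a b) (l - eps)) as [H1|H1]; auto.
        exfalso. apply Hn. exists a, b. auto. }
      specialize (Hlub _ Hu). destruct eps; simpl in *; lra. }
    destruct Hx as [a0 [b0 [Ha0 [Hab0 Hl]]]].
    exists (fun a => 0 < a < a0) (fun b => b0 < b).
    + exists (mkposreal a0 Ha0). intros y Hy Hy0. split; [exact Hy0|].
      assert (Hy' : Rabs (y - 0) < a0) by exact Hy.
      apply Rabs_def2 in Hy'. lra.
    + exists b0. auto.
    + intros a b Ha Hb'. simpl. apply HP. apply ball_R_iff.
      assert (Hle : RInt f a b <= l). { apply Hub. exists a, b. repeat split; lra. }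
      assert (Hge : RInt f a0 b0 <= RInt f a b).
      { assert (H1 := RInt_Chasles (V:=R_CompleteNormedModule) f a a0 b (Hex a a0 ltac:(lra) ltac:(lra)) (Hex a0 b ltac:(lra) ltac:(lra))).
        assert (H2 := RInt_Chasles (V:=R_CompleteNormedModule) f a0 b0 b (Hex a0 b0 ltac:(lra) ltac:(lra)) (Hex b0 b ltac:(lra) ltac:(lra))).
        change plus with Rplus in H1, H2.
        assert (0 <= RInt f a a0). { apply RInt_ge_0. lra. apply Hex; lra. intros; apply Hp; lra. }
        assert (0 <= RInt f b0 b). { apply RInt_ge_0. lra. apply Hex; lra. intros; apply Hp; lra. }
        lra. }
      rewrite Rabs_left1 by lra. lra.
Qed.

Lemma exp_le x y : x <= y -> exp x <= exp y.
Proof. intros [H|H]. left; now apply exp_increasing. subst; lra. Qed.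

Lemma ln_le x y : 0 < x -> x <= y -> ln x <= ln y.
Proof. intros Hx [H|H]. left; now apply ln_increasing. subst; lra. Qed.

Definition gi (y t : R) := Rpower t (y - 1) * exp (- t).

Lemma Rpow_derive c t : 0 < t -> is_derive (fun u => Rpower u c) t (c * Rpower t (c - 1)).
Proof. intros Ht. apply is_derive_Reals. now apply derivable_pt_lim_power. Qed.

Lemma cont_of_derive (f : R -> R) t l : is_derive f t l -> continuous f t.
Proof. intros H. apply (ex_derive_continuous (K:=R_AbsRing) (V:=R_NormedModule)). exists l. exact H. Qed.

Lemma cont_of_ex_derive (f : R -> R) t : ex_derive f t -> continuous f t.
Proof. intros H. apply (ex_derive_continuous (K:=R_AbsRing) (V:=R_NormedModule)). exact H. Qed.

Lemma Rpow_cont c t : 0 < t -> continuous (fun u => Rpower u c) t.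
Proof. intros Ht. eapply cont_of_derive. now apply Rpow_derive. Qed.

Lemma Rpower_pos x y : 0 < Rpower x y.
Proof. unfold Rpower. apply exp_pos. Qed.

Lemma gi_derive y t : 0 < t ->
  is_derive (gi y) t ((y - 1) * Rpower t (y - 1 - 1) * exp (- t) + Rpower t (y - 1) * (-1 * exp (- t))).
Proof.
  intros Ht. unfold gi. apply (Derive.is_derive_mult (fun u => Rpower u (y-1)) (fun u => exp (- u))).
  - now apply Rpow_derive.
  - auto_derive; [auto | ring].
Qed.

Lemma gi_cont y t : 0 < t -> continuous (gi y) t.
Proof. intros Ht. eapply cont_of_derive. now apply gi_derive. Qed.

Lemma gi_pos y t : 0 < gi y t.
Proof. unfold gi. apply Rmult_lt_0_compat. apply Rpower_pos. apply exp_pos. Qed.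

Lemma ln_le_sub1 u : 0 < u -> ln u <= u - 1.
Proof. intros Hu. pose proof (exp_ineq1_le (ln u)). rewrite exp_ln in H by auto. lra. Qed.

Lemma rpow_exp_bound y : exists c, forall t, 1 <= t -> Rpower t (y - 1) <= exp (t / 2 + c).
Proof.
  set (k := Rabs (y - 1) + 1).
  assert (Hk : 0 < k) by (unfold k; pose proof (Rabs_pos (y-1)); lra).
  set (eps := / (2 * k)).
  assert (He : 0 < eps) by (unfold eps; apply Rinv_0_lt_compat; lra).
  exists (k * (- 1 - ln eps)). intros t Ht. unfold Rpower. apply exp_le.
  assert (Hlt : ln t <= eps * t - 1 - ln eps).
  { pose proof (ln_le_sub1 (eps * t) ltac:(apply Rmult_lt_0_compat; lra)).
    rewrite ln_mult in H by lra. lra. }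
  assert (Hl0 : 0 <= ln t). { destruct (Req_dec t 1) as [->|Hne]. rewrite ln_1. lra.
    left. rewrite <- ln_1. apply ln_increasing; lra. }
  assert (H1 : (y - 1) * ln t <= k * ln t).
  { apply Rmult_le_compat_r. auto. unfold k. pose proof (Rle_abs (y-1)). lra. }
  assert (H2 : k * ln t <= k * (eps * t - 1 - ln eps)) by (apply Rmult_le_compat_l; lra).
  assert (H3 : k * (eps * t) = t / 2). { unfold eps. field. lra. }
  nra.
Qed.

Lemma RInt_mono_bounds (g : R -> R) a' a b b' :
  (forall t, a' < t < b' -> 0 <= g t) ->
  (forall u v, a' <= u -> u <= v -> v <= b' -> ex_RInt g u v) ->
  a' <= a -> a <= b -> b <= b' -> RInt g a b <= RInt g a' b'.
Proof.
  intros Hp Hex H1 H2 H3.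
  assert (C1 := RInt_Chasles (V:=R_CompleteNormedModule) g a' a b' (Hex a' a ltac:(lra) ltac:(lra) ltac:(lra)) (Hex a b' ltac:(lra) ltac:(lra) ltac:(lra))).
  assert (C2 := RInt_Chasles (V:=R_CompleteNormedModule) g a b b' (Hex a b ltac:(lra) ltac:(lra) ltac:(lra)) (Hex b b' ltac:(lra) ltac:(lra) ltac:(lra))).
  change plus with Rplus in C1, C2.
  assert (0 <= RInt g a' a). { apply RInt_ge_0. lra. apply Hex; lra. intros; apply Hp; lra. }
  assert (0 <= RInt g b b'). { apply RInt_ge_0. lra. apply Hex; lra. intros; apply Hp; lra. }
  lra.
Qed.

Lemma ex_RInt_cont_pos (g : R -> R) a b :
  (forall t, 0 < t -> continuous g t) -> 0 < a -> a <= b -> ex_RInt g a b.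
Proof.
  intros Hc Ha Hab. apply (ex_RInt_continuous (V:=R_CompleteNormedModule)). intros z Hz.
  apply Hc. rewrite Rmin_left in Hz by lra. lra.
Qed.

Lemma gi_bound y : 0 < y -> exists M, forall a b, 0 < a -> a <= b -> RInt (gi y) a b <= M.
Proof.
  intros Hy. destruct (rpow_exp_bound y) as [c Hc].
  exists (/ y + 2 * exp c). intros a b Ha Hab.
  set (a' := Rmin a 1). set (b' := Rmax b 1).
  assert (Ha' : 0 < a' /\ a' <= a /\ a' <= 1).
  { unfold a'. split. apply Rmin_glb_lt; lra. split. apply Rmin_l. apply Rmin_r. }
  assert (Hb' : b <= b' /\ 1 <= b').
  { unfold b'. split. apply Rmax_l. apply Rmax_r. }
  assert (Hc0 : forall t, 0 < t -> continuous (gi y) t) by (intros; now apply gi_cont).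
  eapply Rle_trans.
  { apply (RInt_mono_bounds (gi y) a' a b b'); try lra.
    intros; left; apply gi_pos. intros; apply ex_RInt_cont_pos; auto; lra. }
  rewrite <- (RInt_Chasles (V:=R_CompleteNormedModule) (gi y) a' 1 b').
  2,3: apply ex_RInt_cont_pos; auto; lra.
  change plus with Rplus.
  apply Rplus_le_compat.
  -
    assert (HI : is_RInt (fun t => Rpower t (y - 1)) a' 1 (minus (Rpower 1 y / y) (Rpower a' y / y))).
    { apply (is_RInt_derive (V:=R_CompleteNormedModule) (fun t => Rpower t y / y)).
      + intros x Hx. rewrite Rmin_left in Hx by lra.
        apply (is_derive_ext (fun t => / y * Rpower t y)). 2:{
        replace (Rpower x (y - 1)) with (/ y * (y * Rpower x (y - 1))) by (field; lra).
        apply is_derive_scal. apply Rpow_derive. lra. }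
        intros t; simpl; unfold Rdiv; ring.
      + intros x Hx. rewrite Rmin_left in Hx by lra. apply Rpow_cont. lra. }
    eapply Rle_trans.
    { apply RInt_le. lra. apply ex_RInt_cont_pos; auto; lra.
      eexists; exact HI.
      intros x Hx. unfold gi. rewrite <- (Rmult_1_r (Rpower x (y-1))) at 2.
      apply Rmult_le_compat_l. left; apply Rpower_pos.
      rewrite <- exp_0. apply exp_le. lra. }
    rewrite (is_RInt_unique _ _ _ _ HI). unfold minus, plus, opp; simpl.
    unfold Rpower at 1. rewrite ln_1, Rmult_0_r, exp_0.
    assert (0 < Rpower a' y / y) by (apply Rdiv_lt_0_compat; [apply Rpower_pos|lra]).
    assert (2 * exp c > 0) by (pose proof (exp_pos c); lra).
    unfold Rdiv. lra.
  -
    assert (HI : is_RInt (fun t => exp c * exp (- t / 2)) 1 b'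
                   (minus (-2 * exp c * exp (- b' / 2)) (-2 * exp c * exp (- 1 / 2)))).
    { apply (is_RInt_derive (V:=R_CompleteNormedModule) (fun t => -2 * exp c * exp (- t / 2))).
      + intros x Hx. auto_derive; [auto | ]. change (@eq R (-2 * exp c * (- (1) * / 2 * exp (- x * / 2))) (exp c * exp (- x / 2))). unfold Rdiv. field.
      + intros x Hx. apply cont_of_ex_derive. auto_derive. auto. }
    eapply Rle_trans.
    { apply RInt_le. lra. apply ex_RInt_cont_pos; auto; lra.
      eexists; exact HI.
      intros x Hx. unfold gi.
      eapply Rle_trans. apply Rmult_le_compat_r. left; apply exp_pos. apply Hc. lra.
      rewrite <- exp_plus. replace (x / 2 + c + - x) with (c + - x / 2) by field.
      rewrite exp_plus. lra. }
    rewrite (is_RInt_unique _ _ _ _ HI). unfold minus, plus, opp; simpl.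
    assert (0 < / y) by (apply Rinv_0_lt_compat; lra).
    assert (exp (- 1 / 2) <= 1) by (rewrite <- exp_0; apply exp_le; lra).
    pose proof (exp_pos c). pose proof (exp_pos (- b' / 2)).
    nra.
Qed.

Lemma Gamma_spec y : 0 < y ->
  is_RInt_gen (gi y) (at_right 0) (Rbar_locally p_infty) (Gamma y) /\ 0 < Gamma y.
Proof.
  intros Hy. destruct (gi_bound y Hy) as [M HM].
  destruct (gen_pos (gi y) M) as [l [Hl Hle]]; auto.
  intros; now apply gi_cont. intros; left; apply gi_pos.
  assert (HG : Gamma y = l).
  { unfold Gamma. apply (is_RInt_gen_unique (V:=R_CompleteNormedModule)).
    exact Hl. }
  rewrite HG. split; auto.
  apply Rlt_le_trans with (RInt (gi y) 1 2); [| apply Hle; lra].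
  apply RInt_gt_0. lra. intros; apply gi_pos. intros; apply gi_cont; lra.
Qed.

Lemma locally_pos x : 0 < x -> locally x (fun t => 0 < t).
Proof.
  intros Hx. exists (mkposreal (x/2) ltac:(lra)). intros t Ht.
  assert (H : Rabs (t - x) < x / 2) by exact Ht. apply Rabs_def2 in H. lra.
Qed.

Lemma filterlim_right0 (f : R -> R) :
  (forall eps, 0 < eps -> exists d, 0 < d /\ forall t, 0 < t < d -> Rabs (f t) < eps) ->
  filterlim f (at_right 0) (locally 0).
Proof.
  intros H P [eps HP]. destruct (H eps (cond_pos eps)) as [d [Hd Hf]].
  exists (mkposreal d Hd). intros t Ht Ht0. apply HP.
  assert (H1 : Rabs (t - 0) < d) by exact Ht. apply Rabs_def2 in H1.
  change (Rabs (f t - 0) < eps). rewrite Rminus_0_r. apply Hf. lra.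
Qed.

Lemma filterlim_pinfty0 (f : R -> R) :
  (forall eps, 0 < eps -> exists M, forall t, M < t -> Rabs (f t) < eps) ->
  filterlim f (Rbar_locally p_infty) (locally 0).
Proof.
  intros H P [eps HP]. destruct (H eps (cond_pos eps)) as [M HM].
  exists M. intros t Ht. apply HP.
  change (Rabs (f t - 0) < eps). rewrite Rminus_0_r. apply HM. lra.
Qed.

Lemma Gamma_succ y : 0 < y -> Gamma (y + 1) = y * Gamma y.
Proof.
  intros Hy.
  destruct (Gamma_spec y Hy) as [H1 _].
  destruct (Gamma_spec (y + 1) ltac:(lra)) as [H2 _].
  set (f := fun t => Rpower t y * exp (- t)).
  set (df := fun t => y * gi y t - gi (y + 1) t).
  assert (Hdf : forall t, 0 < t -> is_derive f t (df t)).
  { intros t Ht. unfold f, df, gi.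
    replace (y + 1 - 1) with y by ring.
    replace (y * (Rpower t (y - 1) * exp (- t)) - Rpower t y * exp (- t))
      with (y * Rpower t (y - 1) * exp (- t) + Rpower t y * (-1 * exp (- t))) by ring.
    apply (Derive.is_derive_mult (fun u => Rpower u y) (fun u => exp (- u))).
    now apply Rpow_derive. auto_derive; [auto | ring]. }
  assert (HD : forall t, 0 < t -> Derive f t = df t).
  { intros t Ht. apply is_derive_unique. now apply Hdf. }
  assert (Hdfc : forall t, 0 < t -> continuous df t).
  { intros t Ht. unfold df.
    apply (continuous_minus (fun u => y * gi y u) (gi (y+1))).
    apply (continuous_scal_r y (gi y)). now apply gi_cont. now apply gi_cont. }
  assert (HI : is_RInt_gen (Derive f) (at_right 0) (Rbar_locally p_infty) (0 - 0)).
  { apply is_RInt_gen_Derive.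
    - exists (fun a => 0 < a) (fun b => 0 < b).
      + exists (mkposreal 1 Rlt_0_1). intros; auto.
      + exists 0. auto.
      + intros a b Ha Hb x Hx. simpl in Hx. eexists. apply Hdf.
        assert (0 < Rmin a b) by (apply Rmin_glb_lt; auto). lra.
    - exists (fun a => 0 < a) (fun b => 0 < b).
      + exists (mkposreal 1 Rlt_0_1). intros; auto.
      + exists 0. auto.
      + intros a b Ha Hb x Hx. simpl in Hx.
        assert (Hx0 : 0 < x) by (assert (0 < Rmin a b) by (apply Rmin_glb_lt; auto); lra).
        apply (continuous_ext_loc _ df).
        * generalize (locally_pos x Hx0). apply filter_imp. intros t Ht. symmetry. now apply HD.
        * now apply Hdfc.
    - apply filterlim_right0. intros eps Heps.
      exists (Rpower eps (/ y)). split. apply Rpower_pos.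
      intros t [Ht0 Ht1]. unfold f.
      rewrite Rabs_pos_eq by (left; apply Rmult_lt_0_compat; [apply Rpower_pos|apply exp_pos]).
      assert (Hr : Rpower t y < eps).
      { replace eps with (Rpower (Rpower eps (/ y)) y).
        apply Rlt_Rpower_l; lra.
        rewrite Rpower_mult. replace (/ y * y) with 1 by (field; lra). apply Rpower_1. lra. }
      assert (exp (- t) <= 1) by (rewrite <- exp_0; apply exp_le; lra).
      pose proof (Rpower_pos t y). nra.
    - apply filterlim_pinfty0. intros eps Heps.
      destruct (rpow_exp_bound (y + 1)) as [c Hc].
      exists (Rmax 1 (2 * (c - ln eps))). intros t Ht.
      assert (Ht1 : 1 <= t) by (pose proof (Rmax_l 1 (2 * (c - ln eps))); lra).
      assert (Ht2 : 2 * (c - ln eps) < t) by (pose proof (Rmax_r 1 (2 * (c - ln eps))); lra).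
      unfold f.
      rewrite Rabs_pos_eq by (left; apply Rmult_lt_0_compat; [apply Rpower_pos|apply exp_pos]).
      specialize (Hc t Ht1). replace (y + 1 - 1) with y in Hc by ring.
      eapply Rle_lt_trans. apply Rmult_le_compat_r. left; apply exp_pos. exact Hc.
      rewrite <- exp_plus. rewrite <- (exp_ln eps Heps). apply exp_increasing. lra. }
  assert (HI' : is_RInt_gen df (at_right 0) (Rbar_locally p_infty) 0).
  { rewrite Rminus_0_r in HI. apply (is_RInt_gen_ext (Derive f)).
    - exists (fun a => 0 < a) (fun b => 0 < b).
      + exists (mkposreal 1 Rlt_0_1). intros; auto.
      + exists 0. auto.
      + intros a b Ha Hb x Hx. simpl in Hx. apply HD.
        assert (0 < Rmin a b) by (apply Rmin_glb_lt; auto). lra.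
    - exact HI. }
  assert (HI2 : is_RInt_gen df (at_right 0) (Rbar_locally p_infty) (y * Gamma y - Gamma (y + 1))).
  { apply (is_RInt_gen_minus (fun t => y * gi y t) (gi (y+1))).
    apply (is_RInt_gen_scal (gi y) y). exact H1. exact H2. }
  assert (E1 : RInt_gen df (at_right 0) (Rbar_locally p_infty) = 0) by (apply is_RInt_gen_unique; exact HI').
  assert (E2 : RInt_gen df (at_right 0) (Rbar_locally p_infty) = y * Gamma y - Gamma (y + 1)) by (apply is_RInt_gen_unique; exact HI2).
  rewrite E1 in E2. lra.
Qed.

Lemma exp_convex a b r : 0 <= r <= 1 -> exp ((1 - r) * a + r * b) <= (1 - r) * exp a + r * exp b.
Proof.
  intros Hr. set (m := (1 - r) * a + r * b).
  assert (Ea : exp a = exp m * exp (a - m)) by (rewrite <- exp_plus; f_equal; ring).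
  assert (Eb : exp b = exp m * exp (b - m)) by (rewrite <- exp_plus; f_equal; ring).
  pose proof (exp_ineq1_le (a - m)). pose proof (exp_ineq1_le (b - m)).
  pose proof (exp_pos m).
  assert (exp m * (1 + (a - m)) <= exp a) by (rewrite Ea; apply Rmult_le_compat_l; lra).
  assert (exp m * (1 + (b - m)) <= exp b) by (rewrite Eb; apply Rmult_le_compat_l; lra).
  assert (Hs : (1 - r) * (exp m * (1 + (a - m))) + r * (exp m * (1 + (b - m))) = exp m) by (unfold m; ring).
  nra.
Qed.

Lemma Wendel_up x r : 0 < x -> 0 <= r <= 1 -> Gamma (x + r) <= Rpower x r * Gamma x.
Proof.
  intros Hx Hr.
  destruct (Gamma_spec x Hx) as [H1 P1].
  destruct (Gamma_spec (x + 1) ltac:(lra)) as [H2 P2].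
  destruct (Gamma_spec (x + r) ltac:(lra)) as [H3 P3].
  set (g := fun t => (1 - r) * Rpower x r * gi x t + r * Rpower x (r - 1) * gi (x + 1) t).
  assert (Hg : is_RInt_gen g (at_right 0) (Rbar_locally p_infty)
                 ((1 - r) * Rpower x r * Gamma x + r * Rpower x (r - 1) * Gamma (x + 1))).
  { apply (is_RInt_gen_plus (fun t => (1 - r) * Rpower x r * gi x t) (fun t => r * Rpower x (r - 1) * gi (x + 1) t)).
    apply (is_RInt_gen_scal (gi x) ((1 - r) * Rpower x r)). exact H1.
    apply (is_RInt_gen_scal (gi (x+1)) (r * Rpower x (r - 1))). exact H2. }
  assert (Hle : norm (Gamma (x + r)) <= (1 - r) * Rpower x r * Gamma x + r * Rpower x (r - 1) * Gamma (x + 1)).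
  { apply (RInt_gen_norm (Fa := at_right 0) (Fb := Rbar_locally p_infty) (gi (x + r)) g); [ | | exact H3 | exact Hg].
    - exists (fun a => 0 < a < 1) (fun b => 1 < b).
      + exists (mkposreal 1 Rlt_0_1). intros t Ht Ht0. split; auto.
        assert (H : Rabs (t - 0) < 1) by exact Ht. apply Rabs_def2 in H. lra.
      + exists 1. auto.
      + intros a b Ha Hb. simpl. lra.
    - exists (fun a => 0 < a) (fun b => 0 < b).
      + exists (mkposreal 1 Rlt_0_1). intros; auto.
      + exists 0. auto.
      + intros a b Ha Hb t Ht. simpl in Ht. assert (Ht0 : 0 < t) by lra.
        change (Rabs (gi (x + r) t) <= g t).
        rewrite Rabs_pos_eq by (left; apply gi_pos).
        unfold g, gi. unfold Rpower.
        set (U := (x - 1) * ln t + - t + r * ln x).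
        set (V := (x + 1 - 1) * ln t + - t + (r - 1) * ln x).
        replace (exp ((x + r - 1) * ln t) * exp (- t)) with (exp ((1 - r) * U + r * V)).
        2:{ rewrite <- exp_plus. f_equal. unfold U, V. ring. }
        replace ((1 - r) * exp (r * ln x) * (exp ((x - 1) * ln t) * exp (- t)) +
                 r * exp ((r - 1) * ln x) * (exp ((x + 1 - 1) * ln t) * exp (- t)))
          with ((1 - r) * exp U + r * exp V).
        2:{ unfold U, V. rewrite !exp_plus. ring. }
        now apply exp_convex. }
  assert (Hx1 : Rpower x (r - 1) * x = Rpower x r).
  { rewrite <- (Rpower_1 x) at 2 by lra. rewrite <- Rpower_plus. f_equal. ring. }
  rewrite Gamma_succ in Hle by lra.
  change (norm (Gamma (x + r))) with (Rabs (Gamma (x + r))) in Hle.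
  rewrite Rabs_pos_eq in Hle by lra.
  replace (Rpower x r * Gamma x) with ((1 - r) * Rpower x r * Gamma x + r * Rpower x (r - 1) * (x * Gamma x)).
  exact Hle. rewrite <- Hx1. ring.
Qed.

Lemma Wendel_low x r : 0 < x -> 0 <= r <= 1 -> x * Gamma x <= Rpower (x + r) (1 - r) * Gamma (x + r).
Proof.
  intros Hx Hr. rewrite <- Gamma_succ by lra.
  replace (x + 1) with ((x + r) + (1 - r)) by ring.
  apply Wendel_up; lra.
Qed.

Lemma mvt_le (f df : R -> R) a b : a <= b ->
  (forall t, a <= t <= b -> is_derive f t (df t)) ->
  exists c, a <= c <= b /\ f b - f a = df c * (b - a).
Proof.
  intros Hab Hd.
  destruct (MVT_gen f a b df) as [c [Hc Hf]].
  - intros x Hx. rewrite Rmin_left, Rmax_right in Hx by lra. apply Hd; lra.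
  - intros x Hx. rewrite Rmin_left, Rmax_right in Hx by lra.
    apply continuity_pt_filterlim. eapply cont_of_derive. apply Hd. lra.
  - rewrite Rmin_left, Rmax_right in Hc by lra. exists c; auto.
Qed.

Lemma ln1p_bounds u : 0 <= u -> u - u ^ 2 / 2 <= ln (1 + u) <= u - u ^ 2 / 2 + u ^ 3.
Proof.
  intros Hu.
  set (phi := fun t => ln (1 + t) - t + t ^ 2 / 2).
  destruct (mvt_le phi (fun t => t ^ 2 / (1 + t)) 0 u Hu) as [c [Hc Hphi]].
  { intros t Ht. unfold phi. auto_derive. lra. field. lra. }
  unfold phi in Hphi. rewrite Rplus_0_r, ln_1 in Hphi.
  assert (H0 : 0 <= c ^ 2 / (1 + c)) by (apply Rdiv_le_0_compat; nra).
  assert (H1 : c ^ 2 / (1 + c) <= u ^ 2).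
  { apply Rle_trans with (c ^ 2). apply Rmult_le_reg_r with (1 + c). lra.
    unfold Rdiv. rewrite Rmult_assoc, Rinv_l by lra. nra. nra. }
  split; nra.
Qed.

Lemma ln1p_le u : -1 < u -> ln (1 + u) <= u.
Proof. intros H. pose proof (ln_le_sub1 (1 + u) ltac:(lra)). lra. Qed.

Lemma ln1p_ge u : -1 < u -> - u / (1 + u) >= - ln (1 + u).
Proof.
  intros H. assert (Hp : 0 < / (1 + u)) by (apply Rinv_0_lt_compat; lra).
  pose proof (ln_le_sub1 (/ (1 + u)) Hp). rewrite ln_Rinv in H0 by lra.
  assert (E : / (1 + u) - 1 = - u / (1 + u)) by (field; lra). lra.
Qed.

Definition hh r x := Gamma (x + r) / Gamma x.
Definition aa r := (r - 1) / 2.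
Definition LL r x := ln (hh r x) - r * ln (x + aa r).
Definition DD r y := ln (1 + r / y) - r * ln (1 + 1 / (y + aa r)).

Section R.
Variable r : R.
Hypothesis Hr : 0 < r <= 1.

Lemma hh_pos x : 0 < x -> 0 < hh r x.
Proof.
  intros Hx. unfold hh. apply Rdiv_lt_0_compat.
  apply (Gamma_spec (x + r)); lra. apply (Gamma_spec x); lra.
Qed.

Lemma hh_succ x : 0 < x -> hh r (x + 1) = hh r x * (1 + r / x).
Proof.
  intros Hx. unfold hh.
  replace (x + 1 + r) with ((x + r) + 1) by ring.
  rewrite !Gamma_succ by lra.
  pose proof (proj2 (Gamma_spec x Hx)). field. lra.
Qed.

Lemma hh_up x : 0 < x -> hh r x <= Rpower x r.
Proof.
  intros Hx. unfold hh. pose proof (proj2 (Gamma_spec x Hx)).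
  apply Rmult_le_reg_r with (Gamma x). auto. unfold Rdiv. rewrite Rmult_assoc, Rinv_l by lra.
  rewrite Rmult_1_r. apply Wendel_up; lra.
Qed.

Lemma hh_low x : 0 < x -> x / Rpower (x + r) (1 - r) <= hh r x.
Proof.
  intros Hx. unfold hh. pose proof (proj2 (Gamma_spec x Hx)).
  pose proof (Rpower_pos (x + r) (1 - r)).
  pose proof (Wendel_low x r Hx ltac:(lra)).
  apply Rmult_le_reg_r with (Gamma x * Rpower (x + r) (1 - r)). nra.
  field_simplify; try lra. 
Qed.
End R.

Section R2.
Variable r : R.
Hypothesis Hr : 0 < r <= 1.

Lemma aa_bounds : -1/2 < aa r <= 0.
Proof. unfold aa. lra. Qed.

Lemma LL_succ x : 1 <= x -> LL r (x + 1) = LL r x + DD r x.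
Proof.
  intros Hx. pose proof aa_bounds as Ha. unfold LL, DD.
  rewrite hh_succ by lra.
  assert (0 < r / x) by (apply Rdiv_lt_0_compat; lra).
  assert (0 < 1 / (x + aa r)) by (apply Rdiv_lt_0_compat; lra).
  assert (0 < hh r x) by (apply hh_pos; lra).
  rewrite ln_mult by lra.
  replace (x + 1 + aa r) with ((x + aa r) * (1 + 1 / (x + aa r))) by (field; lra).
  rewrite ln_mult by lra.
  ring.
Qed.

Lemma DD_bound y : 1 <= y -> Rabs (DD r y) <= 12 / y ^ 3.
Proof.
  intros Hy. pose proof aa_bounds as Ha. set (a := aa r) in *.
  set (z := y + a).
  assert (Hz : y / 2 <= z) by (unfold z; lra).
  assert (Hz0 : 0 < z) by lra.
  assert (Hu1 : 0 <= r / y) by (apply Rdiv_le_0_compat; lra).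
  assert (Hu2 : 0 <= 1 / z) by (apply Rdiv_le_0_compat; lra).
  destruct (ln1p_bounds (r / y) Hu1) as [L1 U1].
  destruct (ln1p_bounds (1 / z) Hu2) as [L2 U2].
  unfold DD. fold a. fold z.
  set (E := r / y - (r / y) ^ 2 / 2 - r * (1 / z - (1 / z) ^ 2 / 2)).
  assert (HE : E = - (r * a ^ 2 / (y ^ 2 * z) + r * a * (2 * y + a) / (2 * y ^ 2 * z ^ 2))).
  { unfold E, z. assert (Har : r = 2 * a + 1) by (unfold a, aa; field). rewrite Har.
    field. split; lra. }
  assert (T1 : 0 <= r * a ^ 2 / (y ^ 2 * z) <= 1 / 2 / y ^ 3).
  { split. apply Rdiv_le_0_compat; [nra | apply Rmult_lt_0_compat; nra].
    apply Rmult_le_reg_r with (y ^ 3 * (y ^ 2 * z)). apply Rmult_lt_0_compat; nra.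
    field_simplify; [ | try lra; try (split; lra) .. ].
    assert (r * a ^ 2 <= 1/4) by nra.
    assert (0 < y ^ 3) by (apply pow_lt; lra).
    assert (0 < y ^ 2) by (apply pow_lt; lra).
    assert (y ^ 3 <= 2 * (y ^ 2 * z)) by (simpl; nra).
    nra. }
  assert (T2 : - (2 / y ^ 3) <= r * a * (2 * y + a) / (2 * y ^ 2 * z ^ 2) <= 0).
  { assert (0 < y ^ 2) by (apply pow_lt; lra). assert (0 < z ^ 2) by (apply pow_lt; lra).
    assert (0 < 2 * y ^ 2 * z ^ 2) by (apply Rmult_lt_0_compat; lra).
    split.
    - apply Rmult_le_reg_r with (y ^ 3 * (2 * y ^ 2 * z ^ 2)). apply Rmult_lt_0_compat; [apply pow_lt; lra | lra].
      field_simplify; [ | try lra; try (split; lra) .. ].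
      assert (0 <= - (r * a) <= 1/2) by nra.
      assert (0 <= 2 * y + a <= 2 * y) by lra.
      assert (- (r * a) * (2 * y + a) <= y) by nra.
      assert (y ^ 2 <= 4 * z ^ 2) by nra.
      assert (0 < y ^ 3) by (apply pow_lt; lra).
      assert (0 < y ^ 2) by (apply pow_lt; lra).
      nra.
    - apply Rmult_le_reg_r with (2 * y ^ 2 * z ^ 2). lra.
      field_simplify; [ | try lra; try (split; lra) .. ]. assert (0 <= r * (- a) * (a + 2 * y)) by (apply Rmult_le_pos; [apply Rmult_le_pos|]; lra). nra. }
  assert (C1 : (r / y) ^ 3 <= 1 / y ^ 3).
  { unfold Rdiv. rewrite Rpow_mult_distr, Rmult_1_l, pow_inv.
    rewrite <- (Rmult_1_l (/ y ^ 3)) at 2. apply Rmult_le_compat_r.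
    left; apply Rinv_0_lt_compat, pow_lt; lra. rewrite <- (pow1 3). apply pow_incr; lra. }
  assert (C2 : (1 / z) ^ 3 <= 8 / y ^ 3).
  { unfold Rdiv. rewrite Rpow_mult_distr, pow1, Rmult_1_l, pow_inv.
    apply Rmult_le_reg_r with (y ^ 3 * z ^ 3). apply Rmult_lt_0_compat; apply pow_lt; lra.
    field_simplify; [ | try lra .. ].
    replace 8 with (2 ^ 3) by ring. rewrite <- Rpow_mult_distr. apply pow_incr; lra. }
  assert (Hy3 : 0 < 1 / y ^ 3) by (apply Rdiv_lt_0_compat; [lra | apply pow_lt; lra]).
  replace (12 / y ^ 3) with (12 * (1 / y ^ 3)) by (field; lra).
  replace (2 / y ^ 3) with (2 * (1 / y ^ 3)) in T2 by (field; lra).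
  replace (1 / 2 / y ^ 3) with (1/2 * (1 / y ^ 3)) in T1 by (field; lra).
  replace (8 / y ^ 3) with (8 * (1 / y ^ 3)) in C2 by (field; lra).
  set (w := 1 / y ^ 3) in *.
  set (A := ln (1 + r / y)) in *. set (B := ln (1 + 1 / z)) in *.
  set (P2 := 1 / z - (1 / z) ^ 2 / 2) in *.
  assert (HB : 0 <= r * (B - P2) <= 8 * w).
  { split. apply Rmult_le_pos; lra.
    assert (r * (B - P2) <= 1 * (B - P2)) by (apply Rmult_le_compat_r; lra). lra. }
  assert (HD : A - r * B = E + (A - (r / y - (r / y) ^ 2 / 2)) - r * (B - P2)) by (unfold E, P2; ring).
  apply Rabs_le. rewrite HD. split; lra.
Qed.
End R2.

Section R3.
Variable r : R.
Hypothesis Hr : 0 < r <= 1.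

Lemma LL_bound0 x : 1 <= x -> Rabs (LL r x) <= 2 / x.
Proof.
  intros Hx. pose proof (aa_bounds r Hr) as Ha. set (a := aa r) in *.
  assert (Hh := hh_pos r Hr x ltac:(lra)).
  assert (Hup : ln (hh r x) <= r * ln x).
  { rewrite <- ln_Rpower. apply ln_le. auto. apply hh_up; lra. }
  assert (Hlow : ln x - (1 - r) * ln (x + r) <= ln (hh r x)).
  { assert (Hp := Rpower_pos (x + r) (1 - r)).
    replace (ln x - (1 - r) * ln (x + r)) with (ln (x / Rpower (x + r) (1 - r))).
    apply ln_le. apply Rdiv_lt_0_compat; lra. apply hh_low; lra.
    unfold Rdiv. rewrite ln_mult, ln_Rinv, ln_Rpower; try lra. apply Rinv_0_lt_compat; lra. }
  assert (E1 : ln (x + a) = ln x + ln (1 + a / x)).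
  { rewrite <- ln_mult. f_equal. field. lra. lra.
    assert (- (1/2) <= a / x). { apply Rmult_le_reg_r with x. lra. unfold Rdiv. rewrite Rmult_assoc, Rinv_l; lra. }
    lra. }
  assert (E2 : ln (x + r) = ln x + ln (1 + r / x)).
  { rewrite <- ln_mult. f_equal. field. lra. lra.
    assert (0 < r / x) by (apply Rdiv_lt_0_compat; lra). lra. }
  assert (Hax : - (1/2) <= a / x <= 0).
  { split. apply Rmult_le_reg_r with x. lra. unfold Rdiv. rewrite Rmult_assoc, Rinv_l; lra.
    apply Rmult_le_reg_r with x. lra. unfold Rdiv. rewrite Rmult_assoc, Rinv_l; lra. }
  assert (Hrx : 0 < r / x <= 1 / x).
  { split. apply Rdiv_lt_0_compat; lra. unfold Rdiv. apply Rmult_le_compat_r.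
    left; apply Rinv_0_lt_compat; lra. lra. }
  assert (G1 := ln1p_ge (a / x) ltac:(lra)).
  assert (G2 := ln1p_le (r / x) ltac:(lra)).
  assert (G3 := ln1p_le (a / x) ltac:(lra)).
  assert (Hq : - (a / x) / (1 + a / x) <= 1 / x).
  { apply Rmult_le_reg_r with (1 + a / x). lra. unfold Rdiv at 1.
    rewrite Rmult_assoc, Rinv_l, Rmult_1_r by lra.
    assert (1 / x * (1 + a / x) >= 1 / x * (1/2)).
    { apply Rmult_ge_compat_l. left. apply Rdiv_lt_0_compat; lra. lra. }
    assert (- (a / x) <= 1/2 * (1/x)).
    { replace (- (a / x)) with ((- a) * (1 / x)) by (field; lra). apply Rmult_le_compat_r. left; apply Rdiv_lt_0_compat; lra. lra. }
    lra. }
  assert (0 <= ln (1 + r / x)) by (rewrite <- ln_1; apply ln_le; lra).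
  unfold LL. fold a. rewrite E1. rewrite E2 in Hlow.
  assert (Hx1 : 1 / x <= 2 / x) by (unfold Rdiv; apply Rmult_le_compat_r; [left; apply Rinv_0_lt_compat|]; lra).
  apply Rabs_le. split.
  - assert ((1 - r) * ln (1 + r / x) <= 1 * (1 / x)).
    { apply Rmult_le_compat; lra. }
    assert (r * ln (1 + a / x) <= 0) by (apply Rmult_le_0_l; lra).
    nra.
  - assert (r * - ln (1 + a / x) <= 1 * (1 / x)).
    { apply Rmult_le_compat; lra. }
    lra.
Qed.

Lemma tele_bound y : 1 <= y -> 1 / y ^ 3 <= 1 / (2 * (y - 1/2) ^ 2) - 1 / (2 * (y + 1 - 1/2) ^ 2).
Proof.
  intros Hy.
  replace (1 / (2 * (y - 1/2) ^ 2) - 1 / (2 * (y + 1 - 1/2) ^ 2)) with (y / ((y - 1/2) ^ 2 * (y + 1/2) ^ 2)) by (field; lra).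
  apply Rmult_le_reg_r with (y ^ 3 * ((y - 1/2) ^ 2 * (y + 1/2) ^ 2)).
  apply Rmult_lt_0_compat. apply pow_lt; lra. apply Rmult_lt_0_compat; apply pow_lt; lra.
  field_simplify; [ | lra .. ].
  nra.
Qed.

Lemma LL_tele x (k : nat) : 1 <= x ->
  Rabs (LL r x - LL r (x + INR k)) <= 12 * (1 / (2 * (x - 1/2) ^ 2) - 1 / (2 * (x + INR k - 1/2) ^ 2)).
Proof.
  intros Hx. induction k as [|k IH].
  - simpl. rewrite Rplus_0_r. unfold Rminus at 1. rewrite Rplus_opp_r, Rabs_R0. lra.
  - rewrite S_INR. replace (x + (INR k + 1)) with ((x + INR k) + 1) by ring.
    assert (Hk := pos_INR k).
    rewrite LL_succ by lra.
    assert (Hd := DD_bound r Hr (x + INR k) ltac:(lra)).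
    assert (Ht := tele_bound (x + INR k) ltac:(lra)).
    replace (LL r x - (LL r (x + INR k) + DD r (x + INR k))) with ((LL r x - LL r (x + INR k)) - DD r (x + INR k)) by ring.
    eapply Rle_trans. apply Rabs_triang. rewrite Rabs_Ropp.
    replace (12 / (x + INR k) ^ 3) with (12 * (1 / (x + INR k) ^ 3)) in Hd by (field; lra).
    lra.
Qed.

Lemma LL_bound x : 1 <= x -> Rabs (LL r x) <= 24 / x ^ 2.
Proof.
  intros Hx.
  assert (HT : 12 * (1 / (2 * (x - 1/2) ^ 2)) <= 24 / x ^ 2).
  { apply Rmult_le_reg_r with ((x - 1/2) ^ 2 * x ^ 2). apply Rmult_lt_0_compat; apply pow_lt; lra.
    field_simplify; [ | lra .. ]. nra. }
  apply Rle_trans with (12 * (1 / (2 * (x - 1/2) ^ 2))); auto.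
  apply Rnot_lt_le. intro Hlt.
  set (eps := Rabs (LL r x) - 12 * (1 / (2 * (x - 1 / 2) ^ 2))).
  assert (He : 0 < eps) by (unfold eps; lra).
  destruct (archimed (2 / eps)) as [Hk _].
  set (k := Z.to_nat (up (2 / eps))).
  assert (Hkk : 2 / eps < INR k).
  { unfold k. rewrite INR_IZR_INZ. rewrite Z2Nat.id. auto.
    apply le_IZR. assert (0 < 2 / eps) by (apply Rdiv_lt_0_compat; lra). lra. }
  assert (Hk0 := pos_INR k).
  assert (H1 := LL_tele x k Hx).
  assert (H2 := LL_bound0 (x + INR k) ltac:(lra)).
  assert (H3 : 2 / (x + INR k) < eps).
  { assert (H5 : eps * (2 / eps) < eps * (x + INR k)) by (apply Rmult_lt_compat_l; lra).
    replace (eps * (2 / eps)) with 2 in H5 by (field; lra).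
    apply Rmult_lt_reg_r with (x + INR k). lra.
    replace (2 / (x + INR k) * (x + INR k)) with 2 by (field; lra). lra. }
  assert (H4 : 0 <= 1 / (2 * (x + INR k - 1 / 2) ^ 2)).
  { apply Rdiv_le_0_compat. lra. assert (0 < (x + INR k - 1/2) ^ 2) by (apply pow_lt; lra). lra. }
  assert (Rabs (LL r x) <= Rabs (LL r x - LL r (x + INR k)) + Rabs (LL r (x + INR k))).
  { replace (LL r x) with ((LL r x - LL r (x + INR k)) + LL r (x + INR k)) at 1 by ring. apply Rabs_triang. }
  unfold eps in *. lra.
Qed.
End R3.

Lemma mvt_pow_bound (f df : R -> R) (M : R) (k : nat) (lo hi : R) :
  0 <= M -> lo <= 1 <= hi -> f 1 = 0 ->
  (forall t, lo <= t <= hi -> is_derive f t (df t)) ->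
  (forall t, lo <= t <= hi -> Rabs (df t) <= M * Rabs (t - 1) ^ k) ->
  forall y, lo <= y <= hi -> Rabs (f y) <= M * Rabs (y - 1) ^ (S k).
Proof.
  intros HM0 Hlh Hf1 Hd Hb y Hy.
  assert (HM : forall c, lo <= c <= hi -> Rabs (c - 1) <= Rabs (y - 1) ->
            Rabs (df c * (y - 1)) <= M * Rabs (y - 1) ^ S k).
  { intros c Hc Hcy. rewrite Rabs_mult. simpl.
    rewrite (Rmult_comm (Rabs (y - 1))), <- Rmult_assoc.
    apply Rmult_le_compat_r. apply Rabs_pos.
    eapply Rle_trans. apply Hb. auto.
    apply Rmult_le_compat_l. auto. apply pow_incr. split. apply Rabs_pos. auto. }
  destruct (Rle_or_lt 1 y) as [H1|H1].
  - destruct (mvt_le f df 1 y H1) as [c [Hc Hfc]]. intros t Ht; apply Hd; lra.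
    rewrite Hf1, Rminus_0_r in Hfc. rewrite Hfc. apply HM. lra.
    rewrite !Rabs_pos_eq by lra. lra.
  - destruct (mvt_le f df y 1 ltac:(lra)) as [c [Hc Hfc]]. intros t Ht; apply Hd; lra.
    rewrite Hf1 in Hfc. replace (f y) with (df c * (y - 1)) by lra. apply HM. lra.
    rewrite !Rabs_left1 by lra. lra.
Qed.

Definition P3 r y := 1 + r * (y - 1) + r * (r - 1) / 2 * (y - 1) ^ 2 + r * (r - 1) * (r - 2) / 6 * (y - 1) ^ 3.

Lemma Rpower_1base y : Rpower 1 y = 1.
Proof. unfold Rpower. rewrite ln_1, Rmult_0_r. apply exp_0. Qed.

Lemma der_rpow_plus (f : R -> R) (c e L : R) (g : R -> R) (dg : R) t : 0 < t ->
  (forall u, f u = c * Rpower u e + g u) -> is_derive g t dg ->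
  L = c * (e * Rpower t (e - 1)) + dg -> is_derive f t L.
Proof.
  intros Ht Hf Hg HL. apply (is_derive_ext (fun u => c * Rpower u e + g u)).
  intros; symmetry; apply Hf. rewrite HL.
  apply (is_derive_plus (fun u => c * Rpower u e) g). apply is_derive_scal. now apply Rpow_derive. exact Hg.
Qed.

Section Taylor.
Variable r : R.
Hypothesis Hr : 0 < r <= 1.

Definition MT := 6 * exp (4 * ln 2).

Lemma MT_pos : 0 <= MT.
Proof. unfold MT. pose proof (exp_pos (4 * ln 2)). lra. Qed.

Lemma rpow_neg_bound t c : 1/2 <= t -> -4 <= c <= 0 -> Rpower t c <= exp (4 * ln 2).
Proof.
  intros Ht Hc. unfold Rpower. apply exp_le.
  assert (Hl : - ln 2 <= ln t).
  { rewrite <- ln_Rinv by lra. apply ln_le. lra. lra. }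
  assert (0 < ln 2) by (rewrite <- ln_1; apply ln_increasing; lra).
  destruct (Rle_or_lt 0 (ln t)). nra. nra.
Qed.

Definition tf3 t := r * (r - 1) * (r - 2) * Rpower t (r - 3) - r * (r - 1) * (r - 2).
Definition tf2 t := r * (r - 1) * Rpower t (r - 2) - (r * (r - 1) + r * (r - 1) * (r - 2) * (t - 1)).
Definition tf1 t := r * Rpower t (r - 1) - (r + r * (r - 1) * (t - 1) + r * (r - 1) * (r - 2) / 2 * (t - 1) ^ 2).
Definition tf0 t := Rpower t r - P3 r t.

Lemma tf3_bound y : 1/2 <= y -> Rabs (tf3 y) <= MT * Rabs (y - 1) ^ 1.
Proof.
  intros Hy. apply (mvt_pow_bound tf3 (fun t => r * (r - 1) * (r - 2) * ((r - 3) * Rpower t (r - 3 - 1))) MT 0 (1/2) (y + 1)); try lra.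
  apply MT_pos.
  - unfold tf3. rewrite Rpower_1base. ring.
  - intros t Ht. apply (der_rpow_plus _ (r * (r - 1) * (r - 2)) (r - 3) _ (fun _ => - (r * (r - 1) * (r - 2))) 0). lra.
    intros u; unfold tf3; ring. auto_derive; auto. ring.
  - intros t Ht. simpl. rewrite Rmult_1_r.
    replace (r - 3 - 1) with (r - 4) by ring.
    replace (r * (r - 1) * (r - 2) * ((r - 3) * Rpower t (r - 4))) with ((r * (r - 1) * (r - 2) * (r - 3)) * Rpower t (r - 4)) by ring.
    rewrite Rabs_mult. rewrite (Rabs_pos_eq (Rpower t (r - 4))) by (left; apply Rpower_pos).
    unfold MT. apply Rmult_le_compat. apply Rabs_pos. left; apply Rpower_pos.
    rewrite !Rabs_mult. 
    assert (Rabs r <= 1) by (rewrite Rabs_pos_eq; lra).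
    assert (Rabs (r - 1) <= 1) by (rewrite Rabs_left1; lra).
    assert (Rabs (r - 2) <= 2) by (rewrite Rabs_left1; lra).
    assert (Rabs (r - 3) <= 3) by (rewrite Rabs_left1; lra).
    pose proof (Rabs_pos r). pose proof (Rabs_pos (r-1)). pose proof (Rabs_pos (r-2)). pose proof (Rabs_pos (r-3)).
    assert (Rabs r * Rabs (r - 1) <= 1) by nra.
    assert (Rabs r * Rabs (r - 1) * Rabs (r - 2) <= 2) by nra.
    nra.
    apply rpow_neg_bound; lra.
Qed.

Lemma tf2_bound y : 1/2 <= y -> Rabs (tf2 y) <= MT * Rabs (y - 1) ^ 2.
Proof.
  intros Hy. apply (mvt_pow_bound tf2 tf3 MT 1 (1/2) (y + 1)); try lra.
  apply MT_pos.
  - unfold tf2. rewrite Rpower_1base. ring.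
  - intros t Ht. apply (der_rpow_plus _ (r * (r - 1)) (r - 2) _ (fun u => - (r * (r - 1) + r * (r - 1) * (r - 2) * (u - 1))) (- (r * (r - 1) * (r - 2)))). lra.
    intros u; unfold tf2; ring. auto_derive; auto. ring.
    unfold tf3. replace (r - 2 - 1) with (r - 3) by ring. ring.
  - intros t Ht. apply tf3_bound. lra.
Qed.

Lemma tf1_bound y : 1/2 <= y -> Rabs (tf1 y) <= MT * Rabs (y - 1) ^ 3.
Proof.
  intros Hy. apply (mvt_pow_bound tf1 tf2 MT 2 (1/2) (y + 1)); try lra.
  apply MT_pos.
  - unfold tf1. rewrite Rpower_1base. ring.
  - intros t Ht. apply (der_rpow_plus _ r (r - 1) _ (fun u => - (r + r * (r - 1) * (u - 1) + r * (r - 1) * (r - 2) / 2 * (u - 1) ^ 2)) (- (r * (r - 1) + r * (r - 1) * (r - 2) * (t - 1)))). lra.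
    intros u; unfold tf1; ring. auto_derive; auto. field.
    unfold tf2. replace (r - 1 - 1) with (r - 2) by ring. ring.
  - intros t Ht. apply tf2_bound. lra.
Qed.

Lemma tf0_bound y : 1/2 <= y -> Rabs (tf0 y) <= MT * Rabs (y - 1) ^ 4.
Proof.
  intros Hy. apply (mvt_pow_bound tf0 tf1 MT 3 (1/2) (y + 1)); try lra.
  apply MT_pos.
  - unfold tf0, P3. rewrite Rpower_1base. ring.
  - intros t Ht. apply (der_rpow_plus _ 1 r _ (fun u => - P3 r u) (- (r + r * (r - 1) * (t - 1) + r * (r - 1) * (r - 2) / 2 * (t - 1) ^ 2))). lra.
    intros u; unfold tf0; ring. unfold P3. auto_derive; auto. field.
    unfold tf1. ring.
  - intros t Ht. apply tf1_bound. lra.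
Qed.

Definition KT := MT + 80.

Lemma taylor_r y : 0 < y -> Rabs (Rpower y r - P3 r y) <= KT * (y - 1) ^ 4.
Proof.
  intros Hy. unfold KT. pose proof MT_pos as HM.
  assert (H4 : 0 <= (y - 1) ^ 4) by (replace ((y - 1) ^ 4) with (((y-1)^2)^2) by ring; apply pow2_ge_0).
  destruct (Rle_or_lt (1/2) y) as [H|H].
  - pose proof (tf0_bound y H) as Hb. unfold tf0 in Hb.
    rewrite RPow_abs in Hb. rewrite (Rabs_pos_eq ((y - 1) ^ 4)) in Hb by exact H4. nra.
  - assert (Hp : Rpower y r <= 1).
    { unfold Rpower. rewrite <- exp_0. apply exp_le.
      assert (ln y < 0) by (rewrite <- ln_1; apply ln_increasing; lra). nra. }
    pose proof (Rpower_pos y r).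
    assert (Hq : (1/16) <= (y - 1) ^ 4).
    { replace ((y - 1) ^ 4) with (((1 - y)^2)^2) by ring.
      replace (1/16) with ((1/4)^2) by field. apply pow_incr. split. lra.
      replace (1/4) with ((1/2)^2) by field. apply pow_incr. lra. }
    assert (HP : -3 <= P3 r y <= 3).
    { unfold P3. set (w := y - 1). assert (-1 <= w <= 0) by (unfold w; lra).
      assert (T1 : -1 <= r * w <= 0) by (split; nra).
      assert (Hc2 : -1 <= r * (r - 1) / 2 <= 0) by (split; nra).
      assert (Hw2 : 0 <= w ^ 2 <= 1) by (split; nra).
      assert (T2 : -1 <= r * (r - 1) / 2 * w ^ 2 <= 0) by (split; nra).
      assert (Hc3 : 0 <= r * (r - 1) * (r - 2) / 6 <= 1) by (split; nra).
      assert (Hw3 : -1 <= w ^ 3 <= 0) by (split; nra).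
      assert (T3 : -1 <= r * (r - 1) * (r - 2) / 6 * w ^ 3 <= 0) by (split; nra).
      split; lra. }
    apply Rabs_le. split; nra.
Qed.
End Taylor.

Lemma rpow_quad p : exists K, 0 <= K /\ forall y, 1/2 <= y <= 2 ->
  Rabs (Rpower y p - 1 - p * (y - 1)) <= K * (y - 1) ^ 2.
Proof.
  set (M := Rabs (p * (p - 1)) * exp (Rabs (p - 2) * ln 2)).
  assert (HM : 0 <= M) by (unfold M; apply Rmult_le_pos; [apply Rabs_pos | left; apply exp_pos]).
  assert (Hln2 : 0 < ln 2) by (rewrite <- ln_1; apply ln_increasing; lra).
  assert (B1 : forall y, 1/2 <= y <= 2 -> Rabs (p * Rpower y (p - 1) - p) <= M * Rabs (y - 1) ^ 1).
  { intros y Hy. apply (mvt_pow_bound (fun t => p * Rpower t (p - 1) - p) (fun t => p * ((p - 1) * Rpower t (p - 1 - 1))) M 0 (1/2) 2); try lra.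
    - rewrite Rpower_1base. ring.
    - intros t Ht. apply (der_rpow_plus _ p (p - 1) _ (fun _ => - p) 0). lra. intros; ring.
      auto_derive; auto. ring.
    - intros t Ht. simpl. rewrite Rmult_1_r. unfold M.
      replace (p * ((p - 1) * Rpower t (p - 1 - 1))) with ((p * (p - 1)) * Rpower t (p - 2)) by (replace (p - 1 - 1) with (p - 2) by ring; ring).
      rewrite Rabs_mult. apply Rmult_le_compat_l. apply Rabs_pos.
      rewrite Rabs_pos_eq by (left; apply Rpower_pos). unfold Rpower. apply exp_le.
      assert (Hl1 : - ln 2 <= ln t) by (rewrite <- ln_Rinv by lra; apply ln_le; lra).
      assert (Hl2 : ln t <= ln 2) by (apply ln_le; lra).
      pose proof (Rabs_pos (p - 2)).
      assert (H0 : (p - 2) * ln t <= Rabs ((p - 2) * ln t)) by apply Rle_abs.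
      rewrite Rabs_mult in H0.
      assert (Rabs (ln t) <= ln 2) by (apply Rabs_le; lra).
      assert (Rabs (p - 2) * Rabs (ln t) <= Rabs (p - 2) * ln 2) by (apply Rmult_le_compat_l; lra).
      lra. }
  exists M. split; auto. intros y Hy.
  assert (H : Rabs (Rpower y p - 1 - p * (y - 1)) <= M * Rabs (y - 1) ^ 2).
  { apply (mvt_pow_bound (fun t => Rpower t p - 1 - p * (t - 1)) (fun t => p * Rpower t (p - 1) - p) M 1 (1/2) 2); auto; try lra.
    - rewrite Rpower_1base. ring.
    - intros t Ht. apply (der_rpow_plus _ 1 p _ (fun u => - 1 - p * (u - 1)) (- p)). lra. intros; ring.
      auto_derive; auto. ring. ring. }
  rewrite RPow_abs in H. rewrite (Rabs_pos_eq ((y - 1) ^ 2)) in H by apply pow2_ge_0. exact H.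
Qed.

Definition SB (d : nat) (f : nat -> R) := sum_f_R0 (fun n => Binomial.C d n * f n) d.
Definition Eb (d : nat) (f : nat -> R) := SB d f / 2 ^ d.

Lemma C_n_0' n : Binomial.C n 0 = 1.
Proof. unfold Binomial.C. rewrite Nat.sub_0_r. simpl. field. apply INR_fact_neq_0. Qed.

Lemma C_n_n' n : Binomial.C n n = 1.
Proof. unfold Binomial.C. rewrite Nat.sub_diag. simpl. field. apply INR_fact_neq_0. Qed.

Lemma C_pos n k : 0 < Binomial.C n k.
Proof.
  unfold Binomial.C. apply Rdiv_lt_0_compat. apply INR_fact_lt_0.
  apply Rmult_lt_0_compat; apply INR_fact_lt_0.
Qed.

Lemma SB_succ d f : SB (S d) f = SB d f + SB d (fun n => f (S n)).
Proof.
  unfold SB. destruct d as [|d].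
  - simpl. rewrite !C_n_0'. replace (Binomial.C 1 1) with 1 by (symmetry; apply C_n_n'). ring.
  - rewrite tech5. rewrite C_n_n'.
    rewrite (decomp_sum _ (S d)) by lia. simpl pred.
    rewrite (decomp_sum (fun n => Binomial.C (S d) n * f n) (S d)) by lia. simpl pred.
    rewrite (tech5 (fun n => Binomial.C (S d) n * f (S n)) d). rewrite C_n_n'.
    rewrite !C_n_0'.
    rewrite (sum_eq (fun i => Binomial.C (S (S d)) (S i) * f (S i))
                    (fun i => Binomial.C (S d) i * f (S i) + Binomial.C (S d) (S i) * f (S i))).
    2:{ intros i Hi. rewrite <- pascal by lia. ring. }
    rewrite sum_plus. ring.
Qed.

Lemma Eb_succ d f : Eb (S d) f = (Eb d f + Eb d (fun n => f (S n))) / 2.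
Proof.
  unfold Eb. rewrite SB_succ. simpl. field. apply pow_nonzero. lra.
Qed.

Lemma Eb_ext d f g : (forall n, (n <= d)%nat -> f n = g n) -> Eb d f = Eb d g.
Proof. intros H. unfold Eb, SB. f_equal. apply sum_eq. intros i Hi. rewrite H; auto. Qed.

Lemma Eb_plus d f g : Eb d (fun n => f n + g n) = Eb d f + Eb d g.
Proof.
  unfold Eb, SB. rewrite <- Rdiv_plus_distr. f_equal. rewrite <- sum_plus. apply sum_eq. intros; ring.
Qed.

Lemma Eb_scal d c f : Eb d (fun n => c * f n) = c * Eb d f.
Proof.
  unfold Eb, SB. unfold Rdiv. rewrite <- Rmult_assoc. f_equal. rewrite scal_sum. apply sum_eq. intros; ring.
Qed.

Lemma Eb_le d f g : (forall n, (n <= d)%nat -> f n <= g n) -> Eb d f <= Eb d g.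
Proof.
  intros H. unfold Eb. apply Rmult_le_compat_r. left; apply Rinv_0_lt_compat, pow_lt; lra.
  unfold SB. apply sum_Rle. intros n Hn. apply Rmult_le_compat_l. left; apply C_pos. auto.
Qed.

Lemma Eb_const d c : Eb d (fun _ => c) = c.
Proof.
  induction d as [|d IH].
  - unfold Eb, SB. simpl. rewrite C_n_0'. field.
  - rewrite Eb_succ. rewrite IH. field.
Qed.

Lemma Eb_pow_gen d k : Eb d (fun n => INR n ^ k) = Eb d (fun n => INR n ^ k).
Proof. reflexivity. Qed.

Lemma Eb_m1 d : Eb d (fun n => INR n) = INR d / 2.
Proof.
  induction d as [|d IH].
  - unfold Eb, SB. simpl. field.
  - rewrite Eb_succ. rewrite (Eb_ext d (fun n => INR (S n)) (fun n => INR n + 1)).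
    2:{ intros; rewrite S_INR; ring. }
    rewrite Eb_plus, Eb_const, IH, S_INR. change (Eb d INR) with (Eb d (fun n => INR n)). rewrite IH. field.
Qed.

Lemma Eb_m1' d : Eb d INR = INR d / 2.
Proof. exact (Eb_m1 d). Qed.

Lemma Eb_m2 d : Eb d (fun n => INR n ^ 2) = INR d * (INR d + 1) / 4.
Proof.
  induction d as [|d IH].
  - unfold Eb, SB. simpl. field.
  - rewrite Eb_succ. rewrite (Eb_ext d (fun n => INR (S n) ^ 2) (fun n => INR n ^ 2 + (2 * INR n + 1))).
    2:{ intros; rewrite S_INR; ring. }
    rewrite Eb_plus, (Eb_plus d (fun n => 2 * INR n)), Eb_scal, Eb_const, IH, Eb_m1, ?Eb_m1', S_INR. field.
Qed.

Lemma Eb_m3 d : Eb d (fun n => INR n ^ 3) = INR d ^ 2 * (INR d + 3) / 8.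
Proof.
  induction d as [|d IH].
  - unfold Eb, SB. simpl. field.
  - rewrite Eb_succ. rewrite (Eb_ext d (fun n => INR (S n) ^ 3) (fun n => INR n ^ 3 + (3 * INR n ^ 2 + (3 * INR n + 1)))).
    2:{ intros; rewrite S_INR; ring. }
    rewrite Eb_plus, (Eb_plus d (fun n => 3 * INR n ^ 2)), (Eb_plus d (fun n => 3 * INR n)), !Eb_scal, Eb_const, IH, Eb_m1, ?Eb_m1', Eb_m2, S_INR. field.
Qed.

Lemma Eb_m4 d : Eb d (fun n => INR n ^ 4) = INR d * (INR d + 1) * (INR d ^ 2 + 5 * INR d - 2) / 16.
Proof.
  induction d as [|d IH].
  - unfold Eb, SB. simpl. field.
  - rewrite Eb_succ. rewrite (Eb_ext d (fun n => INR (S n) ^ 4) (fun n => INR n ^ 4 + (4 * INR n ^ 3 + (6 * INR n ^ 2 + (4 * INR n + 1))))).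
    2:{ intros; rewrite S_INR; ring. }
    rewrite Eb_plus, (Eb_plus d (fun n => 4 * INR n ^ 3)), (Eb_plus d (fun n => 6 * INR n ^ 2)), (Eb_plus d (fun n => 4 * INR n)), !Eb_scal, Eb_const, IH, Eb_m1, ?Eb_m1', Eb_m2, Eb_m3, S_INR. field.
Qed.

Lemma Eb_poly4 d c0 c1 c2 c3 c4 :
  Eb d (fun n => c0 + c1 * INR n + c2 * INR n ^ 2 + c3 * INR n ^ 3 + c4 * INR n ^ 4)
  = c0 + c1 * (INR d / 2) + c2 * (INR d * (INR d + 1) / 4) + c3 * (INR d ^ 2 * (INR d + 3) / 8)
    + c4 * (INR d * (INR d + 1) * (INR d ^ 2 + 5 * INR d - 2) / 16).
Proof.
  rewrite Eb_plus, Eb_plus, Eb_plus, Eb_plus, !Eb_scal, Eb_const, Eb_m1, Eb_m2, Eb_m3, Eb_m4. reflexivity.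
Qed.

Lemma Eb_central d c0 c1 c2 c3 c4 :
  Eb d (fun n => c0 + c1 * (INR n - INR d / 2) + c2 * (INR n - INR d / 2) ^ 2
                 + c3 * (INR n - INR d / 2) ^ 3 + c4 * (INR n - INR d / 2) ^ 4)
  = c0 + c2 * (INR d / 4) + c4 * (INR d * (3 * INR d - 2) / 16).
Proof.
  set (D := INR d).
  set (b1 := c1 - c2 * D + 3 * c3 * D ^ 2 / 4 - 4 * c4 * D ^ 3 / 8).
  set (b0 := c0 - c1 * D / 2 + c2 * D ^ 2 / 4 - c3 * D ^ 3 / 8 + c4 * D ^ 4 / 16).
  set (b2 := c2 - 3 * c3 * D / 2 + 6 * c4 * D ^ 2 / 4).
  set (b3 := c3 - 2 * c4 * D).
  rewrite (Eb_ext d _ (fun n => b0 + b1 * INR n + b2 * INR n ^ 2 + b3 * INR n ^ 3 + c4 * INR n ^ 4)).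
  2:{ intros n Hn. unfold b0, b1, b2, b3. field. }
  rewrite Eb_poly4. fold D. unfold b0, b1, b2, b3. field.
Qed.

Lemma le_div (a b c : R) : 0 < c -> a * c <= b -> a <= b / c.
Proof.
  intros Hc H. replace a with ((a * c) * / c) by (field; lra).
  apply Rmult_le_compat_r. left; apply Rinv_0_lt_compat; auto. auto.
Qed.

Lemma div_le (a b c : R) : 0 < c -> a <= b * c -> a / c <= b.
Proof.
  intros Hc H. replace b with ((b * c) * / c) by (field; lra).
  apply Rmult_le_compat_r. left; apply Rinv_0_lt_compat; auto. auto.
Qed.

Lemma exp_m1_bound w : Rabs (exp w - 1) <= Rabs w * exp (Rabs w).
Proof.
  destruct (Rle_or_lt 0 w) as [H|H].
  - rewrite (Rabs_pos_eq w) by lra.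
    assert (1 <= exp w) by (rewrite <- exp_0; apply exp_le; lra).
    rewrite Rabs_pos_eq by lra.
    pose proof (exp_ineq1_le (- w)).
    assert (exp w * exp (- w) = 1) by (rewrite <- exp_plus; replace (w + - w) with 0 by ring; apply exp_0).
    pose proof (exp_pos w). nra.
  - rewrite (Rabs_left w) by lra.
    assert (exp w <= 1) by (rewrite <- exp_0; apply exp_le; lra).
    rewrite Rabs_left1 by lra.
    pose proof (exp_ineq1_le w).
    assert (1 <= exp (- w)) by (rewrite <- exp_0; apply exp_le; lra).
    nra.
Qed.

Lemma rpow_le_1p y r : 0 < y -> 0 < r <= 1 -> Rpower y r <= 1 + y.
Proof.
  intros Hy Hr. destruct (Rle_or_lt y 1) as [H|H].
  - assert (Rpower y r <= 1).
    { unfold Rpower. rewrite <- exp_0. apply exp_le.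
      assert (ln y <= 0) by (rewrite <- ln_1; apply ln_le; lra). nra. }
    lra.
  - assert (Rpower y r <= Rpower y 1) by (apply Rle_Rpower; lra).
    rewrite Rpower_1 in H0 by lra. lra.
Qed.

Lemma rpow_le_1 y r : 0 < y <= 1 -> 0 < r -> Rpower y r <= 1.
Proof.
  intros Hy Hr. unfold Rpower. rewrite <- exp_0. apply exp_le.
  assert (ln y <= 0) by (rewrite <- ln_1; apply ln_le; lra). nra.
Qed.

Section Main.
Variable r : R.
Hypothesis Hr : 0 < r <= 1.

Definition Yp (d n : nat) := 2 * (INR n + r - 1) / INR d.
Definition Phi (d n : nat) := Rpower (2 / INR d) r * (Rpower 2 r * hh r (INR n / 2)).

Lemma hh_repr x : 0 < x -> 0 < x + aa r -> hh r x = exp (LL r x) * Rpower (x + aa r) r.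
Proof.
  intros Hx Hxa. unfold LL, Rpower. rewrite <- exp_plus.
  replace (ln (hh r x) - r * ln (x + aa r) + r * ln (x + aa r)) with (ln (hh r x)) by ring.
  rewrite exp_ln by (apply hh_pos; auto). reflexivity.
Qed.

Lemma Phi_repr d n : 0 < INR d -> (2 <= n)%nat -> Phi d n = Rpower (Yp d n) r * exp (LL r (INR n / 2)).
Proof.
  intros Hd Hn. assert (Hn2 : 2 <= INR n) by (apply (le_INR 2); auto).
  pose proof (aa_bounds r Hr).
  unfold Phi. rewrite hh_repr by lra.
  assert (0 < 2 / INR d) by (apply Rdiv_lt_0_compat; lra).
  replace (Yp d n) with ((2 / INR d) * 2 * (INR n / 2 + aa r)) by (unfold Yp, aa; field; lra).
  rewrite <- Rpower_mult_distr by (try apply Rmult_lt_0_compat; lra).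
  rewrite <- Rpower_mult_distr by lra. ring.
Qed.
End Main.

Section Main2.
Variable r : R.
Hypothesis Hr : 0 < r <= 1.

Definition Gf (d n : nat) := match n with O => 0 | S _ => Phi r d n end.
Definition errf (d n : nat) := Gf d n - P3 r (Yp r d n).
Definition gb (d n : nat) := (1 + Yp r d n) / INR d ^ 2 + (INR n - INR d / 2) ^ 4 / INR d ^ 4 + (Yp r d n - 1) ^ 4.
Definition Kall := 96 * exp 24 * 256 + 256 + KT + 4.

Lemma pow4_nonneg x : 0 <= x ^ 4.
Proof. replace (x ^ 4) with ((x ^ 2) ^ 2) by ring. apply pow2_ge_0. Qed.

Lemma Yp_ge d n : 4 <= INR d -> -1/2 <= Yp r d n.
Proof.
  intros Hd. unfold Yp. pose proof (pos_INR n).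
  apply le_div. lra. lra.
Qed.

Lemma gb_parts_nonneg d n : 4 <= INR d ->
  0 <= (1 + Yp r d n) / INR d ^ 2 /\ 0 <= (INR n - INR d / 2) ^ 4 / INR d ^ 4 /\ 0 <= (Yp r d n - 1) ^ 4.
Proof.
  intros Hd. pose proof (Yp_ge d n Hd).
  split. apply Rdiv_le_0_compat. lra. apply pow_lt; lra.
  split. apply Rdiv_le_0_compat. apply pow4_nonneg. apply pow_lt; lra.
  apply pow4_nonneg.
Qed.

Lemma key_ratio d n : 4 <= INR d -> (1 <= n)%nat ->
  Rpower (Yp r d n) r / INR n ^ 2 <= 16 * ((1 + Yp r d n) / INR d ^ 2) + 256 * ((INR n - INR d / 2) ^ 4 / INR d ^ 4).
Proof.
  intros Hd Hn. assert (Hn1 : 1 <= INR n) by (apply (le_INR 1); auto).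
  assert (HY : 0 < Yp r d n) by (unfold Yp; apply Rdiv_lt_0_compat; lra).
  destruct (gb_parts_nonneg d n Hd) as [P1 [P2 P3']].
  assert (Hn2 : 0 < INR n ^ 2) by (apply pow_lt; lra).
  destruct (Rle_or_lt (INR d / 4) (INR n)) as [H|H].
  - assert (Hr1 := rpow_le_1p (Yp r d n) r HY Hr).
    assert (Rpower (Yp r d n) r / INR n ^ 2 <= (1 + Yp r d n) * (16 / INR d ^ 2)).
    { unfold Rdiv. apply Rmult_le_compat. left; apply Rpower_pos. left; apply Rinv_0_lt_compat; auto. auto.
      apply Rmult_le_reg_r with (INR n ^ 2 * INR d ^ 2). apply Rmult_lt_0_compat; auto. apply pow_lt; lra.
      field_simplify; [ | lra .. ]. 
      assert (INR d ^ 2 <= 16 * INR n ^ 2). { replace 16 with (4 ^ 2) by ring. rewrite <- Rpow_mult_distr. apply pow_incr. lra. }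
      lra. }
    replace ((1 + Yp r d n) * (16 / INR d ^ 2)) with (16 * ((1 + Yp r d n) / INR d ^ 2)) in H0 by (field; lra).
    lra.
  - assert (Hy1 : Yp r d n <= 1).
    { unfold Yp. apply div_le. lra. lra. }
    assert (Hr1 := rpow_le_1 (Yp r d n) r ltac:(lra) ltac:(lra)).
    assert (Rpower (Yp r d n) r / INR n ^ 2 <= 1).
    { apply div_le. auto.
      assert (1 <= INR n ^ 2) by (rewrite <- (pow1 2); apply pow_incr; lra). lra. }
    assert (1 <= 256 * ((INR n - INR d / 2) ^ 4 / INR d ^ 4)).
    { apply Rmult_le_reg_r with (INR d ^ 4). apply pow_lt; lra.
      field_simplify; [ | lra .. ].
      replace ((INR n - INR d / 2) ^ 4) with ((INR d / 2 - INR n) ^ 4) by ring.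
      assert (INR d ^ 4 / 256 <= (INR d / 2 - INR n) ^ 4).
      { replace (INR d ^ 4 / 256) with ((INR d / 4) ^ 4) by field. apply pow_incr. lra. }
      field_simplify in H1. lra. }
    lra.
Qed.

Lemma Phi_near d n : 4 <= INR d -> (1 <= n)%nat ->
  Rabs (Phi r d n - Rpower (Yp r d n) r) <= 96 * exp 24 * 256 * (((1 + Yp r d n) / INR d ^ 2) + ((INR n - INR d / 2) ^ 4 / INR d ^ 4)).
Proof.
  intros Hd Hn. destruct (gb_parts_nonneg d n Hd) as [P1 [P2 P3']].
  assert (Hn1 : 1 <= INR n) by (apply (le_INR 1); auto).
  assert (HY : 0 < Yp r d n) by (unfold Yp; apply Rdiv_lt_0_compat; lra).
  pose proof (exp_pos 24).
  destruct (Nat.eq_dec n 1) as [E|E].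
  - subst n. simpl INR in *.
    assert (H0 : 0 <= Phi r d 1).
    { unfold Phi. apply Rmult_le_pos. left; apply Rpower_pos. apply Rmult_le_pos. left; apply Rpower_pos.
      left; apply (hh_pos r Hr); simpl; lra. }
    assert (H1 : Phi r d 1 <= 1).
    { unfold Phi. simpl INR. assert (hh r (1/2) <= Rpower (1/2) r) by (apply (hh_up r Hr); simpl; lra).
      assert (Rpower 2 r * hh r (1 / 2) <= Rpower 2 r * Rpower (1/2) r) by (apply Rmult_le_compat_l; [left; apply Rpower_pos|auto]).
      rewrite Rpower_mult_distr in H2 by lra. replace (2 * (1/2)) with 1 in H2 by field. rewrite Rpower_1base in H2.
      assert (Rpower (2 / INR d) r <= 1) by (apply rpow_le_1; [split; [apply Rdiv_lt_0_compat; lra | apply div_le; lra] | lra]).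
      assert (0 <= Rpower 2 r * hh r (1 / 2)) by (apply Rmult_le_pos; [left; apply Rpower_pos|left; apply (hh_pos r Hr); simpl; lra]).
      pose proof (Rpower_pos (2 / INR d) r). nra. }
    assert (H2 : Rpower (Yp r d 1) r <= 1).
    { apply rpow_le_1; [split; auto | lra]. unfold Yp. apply div_le; simpl; lra. }
    pose proof (Rpower_pos (Yp r d 1) r).
    assert (H3b : 1 <= 256 * ((1 - INR d / 2) ^ 4 / INR d ^ 4)).
    { apply Rmult_le_reg_r with (INR d ^ 4). apply pow_lt; lra.
      field_simplify; [ | lra .. ].
      replace ((1 - INR d / 2) ^ 4) with ((INR d / 2 - 1) ^ 4) by ring.
      assert (INR d ^ 4 / 256 <= (INR d / 2 - 1) ^ 4).
      { replace (INR d ^ 4 / 256) with ((INR d / 4) ^ 4) by field. apply pow_incr. lra. }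
      field_simplify in H4. lra. }
    set (Q := (1 - INR d / 2) ^ 4 / INR d ^ 4) in *.
    set (P := (1 + Yp r d 1) / INR d ^ 2) in *.
    assert (HK : 256 <= 96 * exp 24 * 256).
    { assert (1 <= exp 24) by (rewrite <- exp_0; apply exp_le; lra). lra. }
    assert (0 <= Q) by (unfold Q; apply Rdiv_le_0_compat; [apply pow4_nonneg | apply pow_lt; lra]).
    assert (256 * Q <= 96 * exp 24 * 256 * (P + Q)) by nra.
    apply Rabs_le. split; lra.
  - assert (Hn2 : (2 <= n)%nat) by lia. assert (Hn2' : 2 <= INR n) by (apply (le_INR 2); auto).
    rewrite Phi_repr by (auto; lra).
    set (L := LL r (INR n / 2)).
    assert (HL : Rabs L <= 96 / INR n ^ 2).
    { unfold L. eapply Rle_trans. apply (LL_bound r Hr); lra. apply Req_le. field. lra. }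
    assert (HL24 : Rabs L <= 24).
    { eapply Rle_trans. apply HL. apply div_le. apply pow_lt; lra. simpl. nra. }
    assert (HE := exp_m1_bound L).
    assert (HE2 : Rabs (exp L - 1) <= 96 / INR n ^ 2 * exp 24).
    { eapply Rle_trans. apply HE. apply Rmult_le_compat. apply Rabs_pos. left; apply exp_pos. auto. apply exp_le; auto. }
    replace (Rpower (Yp r d n) r * exp L - Rpower (Yp r d n) r) with (Rpower (Yp r d n) r * (exp L - 1)) by ring.
    rewrite Rabs_mult, (Rabs_pos_eq (Rpower _ _)) by (left; apply Rpower_pos).
    eapply Rle_trans. apply Rmult_le_compat_l. left; apply Rpower_pos. exact HE2.
    assert (KR := key_ratio d n Hd Hn).
    replace (Rpower (Yp r d n) r * (96 / INR n ^ 2 * exp 24)) with (96 * exp 24 * (Rpower (Yp r d n) r / INR n ^ 2)) by (field; lra).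
    assert (0 < 96 * exp 24) by lra.
    assert (96 * exp 24 * (Rpower (Yp r d n) r / INR n ^ 2) <= 96 * exp 24 * (16 * ((1 + Yp r d n) / INR d ^ 2) + 256 * ((INR n - INR d / 2) ^ 4 / INR d ^ 4))) by (apply Rmult_le_compat_l; lra).
    nra.
Qed.

Lemma P3_small y : -1/2 <= y <= 0 -> Rabs (P3 r y) <= 4.
Proof.
  intros Hy. unfold P3. set (w := y - 1). assert (-3/2 <= w <= -1) by (unfold w; lra).
  assert (T1 : -3/2 <= r * w <= 0) by (split; nra).
  assert (Hc2 : -1 <= r * (r - 1) / 2 <= 0) by (split; nra).
  assert (Hw2 : 0 <= w ^ 2 <= 9/4) by (split; nra).
  assert (T2 : -9/4 <= r * (r - 1) / 2 * w ^ 2 <= 0) by (split; nra).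
  assert (Hc3 : 0 <= r * (r - 1) * (r - 2) / 6 <= 1/3) by (split; nra).
  assert (Hw3 : -27/8 <= w ^ 3 <= 0) by (split; nra).
  assert (T3 : -9/8 <= r * (r - 1) * (r - 2) / 6 * w ^ 3 <= 0) by (split; nra).
  apply Rabs_le. split; lra.
Qed.

Lemma err_bound d n : 4 <= INR d -> Rabs (errf d n) <= Kall * gb d n.
Proof.
  intros Hd. destruct (gb_parts_nonneg d n Hd) as [P1 [P2 P3']].
  assert (HK : 0 <= KT) by (unfold KT; pose proof (MT_pos); lra).
  pose proof (exp_pos 24).
  unfold errf, gb, Kall. destruct n as [|m].
  - simpl Gf. rewrite Rminus_0_l, Rabs_Ropp.
    assert (HY : Yp r d 0 = 2 * (r - 1) / INR d) by (unfold Yp; simpl; f_equal; ring).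
    assert (Hy : -1/2 <= Yp r d 0 <= 0).
    { split. apply Yp_ge; auto. rewrite HY. apply div_le. lra. lra. }
    assert (H1 := P3_small _ Hy).
    assert (H2 : 1 ^ 4 <= (1 - Yp r d 0) ^ 4) by (apply pow_incr; lra).
    replace ((1 - Yp r d 0) ^ 4) with ((Yp r d 0 - 1) ^ 4) in H2 by ring. rewrite pow1 in H2.
    nra.
  - change (Gf d (S m)) with (Phi r d (S m)).
    assert (HY : 0 < Yp r d (S m)) by (unfold Yp; apply Rdiv_lt_0_compat; [rewrite S_INR; pose proof (pos_INR m)|]; lra).
    assert (H1 := Phi_near d (S m) Hd ltac:(lia)).
    assert (H2 := taylor_r r Hr (Yp r d (S m)) HY).
    replace (Phi r d (S m) - P3 r (Yp r d (S m))) with ((Phi r d (S m) - Rpower (Yp r d (S m)) r) + (Rpower (Yp r d (S m)) r - P3 r (Yp r d (S m)))) by ring.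
    eapply Rle_trans. apply Rabs_triang. nra.
Qed.
End Main2.

Lemma inv_INR_lim : is_lim_seq (fun n => / INR n) 0.
Proof.
  replace (Finite 0) with (Rbar_inv p_infty) by reflexivity.
  apply is_lim_seq_inv. apply is_lim_seq_INR. discriminate.
Qed.

Lemma lim_poly (Q : R -> R) : continuity_pt Q 0 -> is_lim_seq (fun n => Q (/ INR n)) (Q 0).
Proof. intros H. apply is_lim_seq_continuous. auto. apply inv_INR_lim. Qed.

Section H.
Variable r : R.
Hypothesis Hr : 0 < r <= 1.

Definition bb := r - 1.
Definition q2 := r * (r - 1) / 2.
Definition q3 := r * (r - 1) * (r - 2) / 6.

Lemma EP3 d : 0 < INR d ->
  INR d * (Eb d (fun n => P3 r (Yp r d n)) - 1)
  = (2 * r * bb + q2) + (4 * q2 * bb ^ 2 + 6 * q3 * bb) * / INR d + 8 * q3 * bb ^ 3 * (/ INR d) ^ 2.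
Proof.
  intros Hd. set (D := INR d).
  set (al := 2 / D). set (be := 2 * bb / D).
  rewrite (Eb_ext d _ (fun n => (1 + r * be + q2 * be ^ 2 + q3 * be ^ 3)
     + (r * al + 2 * q2 * al * be + 3 * q3 * al * be ^ 2) * (INR n - INR d / 2)
     + (q2 * al ^ 2 + 3 * q3 * al ^ 2 * be) * (INR n - INR d / 2) ^ 2
     + (q3 * al ^ 3) * (INR n - INR d / 2) ^ 3 + 0 * (INR n - INR d / 2) ^ 4)).
  2:{ intros n Hn. unfold P3, Yp, q2, q3, al, be, bb. fold D. field. apply Rgt_not_eq; unfold D; lra. }
  rewrite Eb_central. fold D. unfold al, be, q2, q3, bb. field. apply Rgt_not_eq; unfold D; lra.
Qed.

Lemma Egb d : 0 < INR d ->
  INR d * Eb d (gb r d) = let t := / INR d in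
    2 * t + 2 * bb * t ^ 2 + 3 * t / 16 - t ^ 2 / 8 + 16 * bb ^ 4 * t ^ 3 + 24 * bb ^ 2 * t ^ 2 + 3 * t - 2 * t ^ 2.
Proof.
  intros Hd. set (D := INR d). simpl.
  set (al := 2 / D). set (be := 2 * bb / D).
  rewrite (Eb_ext d _ (fun n => ((2 + be) / D ^ 2 + be ^ 4)
     + (al / D ^ 2 + 4 * al * be ^ 3) * (INR n - INR d / 2)
     + (6 * al ^ 2 * be ^ 2) * (INR n - INR d / 2) ^ 2
     + (4 * al ^ 3 * be) * (INR n - INR d / 2) ^ 3 + (1 / D ^ 4 + al ^ 4) * (INR n - INR d / 2) ^ 4)).
  2:{ intros n Hn. unfold gb, Yp, al, be, bb. fold D. field. apply Rgt_not_eq; unfold D; lra. }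
  rewrite Eb_central. fold D. unfold al, be, bb. field. apply Rgt_not_eq; unfold D; lra.
Qed.
End H.

Lemma Eb_abs_bound d f g : (forall n, (n <= d)%nat -> Rabs (f n) <= g n) -> Rabs (Eb d f) <= Eb d g.
Proof.
  intros H. apply Rabs_le. split.
  - replace (- Eb d g) with (Eb d (fun n => -1 * g n)) by (rewrite Eb_scal; ring).
    apply Eb_le. intros n Hn. specialize (H n Hn). apply Rabs_le_between in H. lra.
  - apply Eb_le. intros n Hn. specialize (H n Hn). apply Rabs_le_between in H. lra.
Qed.

Lemma ev_ge4 : eventually (fun n : nat => 4 <= INR n).
Proof. exists 4%nat. intros n Hn. apply (le_INR 4) in Hn. simpl in Hn. lra. Qed.

Section H2.
Variable r : R.
Hypothesis Hr : 0 < r <= 1.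

Lemma S_lim : is_lim_seq (fun d => INR d * (Eb d (Gf r d) - 1)) (2 * r * bb r + q2 r).
Proof.
  set (c0 := 2 * r * bb r + q2 r).
  assert (Hsplit : forall d, Eb d (Gf r d) = Eb d (fun n => P3 r (Yp r d n)) + Eb d (errf r d)).
  { intros d. rewrite <- Eb_plus. apply Eb_ext. intros n _. unfold errf. ring. }
  set (A := fun d => INR d * (Eb d (fun n => P3 r (Yp r d n)) - 1)).
  set (B := fun d => INR d * Eb d (errf r d)).
  assert (HA : is_lim_seq A c0).
  { set (Q := fun t => c0 + (4 * q2 r * bb r ^ 2 + 6 * q3 r * bb r) * t + 8 * q3 r * bb r ^ 3 * t ^ 2).
    apply is_lim_seq_ext_loc with (fun d => Q (/ INR d)).
    { destruct ev_ge4 as [N HN]. exists N. intros n Hn. specialize (HN n Hn).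
      unfold A, Q. rewrite EP3 by lra. reflexivity. }
    replace c0 with (Q 0) by (unfold Q; ring).
    apply lim_poly. apply continuity_pt_filterlim. apply cont_of_ex_derive. unfold Q. auto_derive. auto. }
  set (Q2 := fun t => 2 * t + 2 * bb r * t ^ 2 + 3 * t / 16 - t ^ 2 / 8 + 16 * bb r ^ 4 * t ^ 3 + 24 * bb r ^ 2 * t ^ 2 + 3 * t - 2 * t ^ 2).
  assert (HQ2 : is_lim_seq (fun d => Kall * Q2 (/ INR d)) 0).
  { replace (Finite 0) with (Finite (Kall * Q2 0)) by (unfold Q2; f_equal; field).
    apply is_lim_seq_scal_l with (a := Kall) (lu := Q2 0).
    apply lim_poly. apply continuity_pt_filterlim. apply cont_of_ex_derive. unfold Q2. auto_derive. auto. }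
  assert (HB : is_lim_seq B 0).
  { apply is_lim_seq_le_le_loc with (fun d => - (Kall * Q2 (/ INR d))) (fun d => Kall * Q2 (/ INR d)).
    - destruct ev_ge4 as [N HN]. exists N. intros n Hn. specialize (HN n Hn).
      assert (Hb : Rabs (Eb n (errf r n)) <= Kall * Eb n (gb r n)).
      { rewrite <- Eb_scal. apply Eb_abs_bound. intros k Hk. apply err_bound; auto. }
      assert (E : INR n * Eb n (gb r n) = Q2 (/ INR n)) by (rewrite Egb by lra; reflexivity).
      unfold B. apply Rabs_le_between.
      rewrite Rabs_mult, Rabs_pos_eq by lra. rewrite <- E.
      replace (Kall * (INR n * Eb n (gb r n))) with (INR n * (Kall * Eb n (gb r n))) by ring.
      apply Rmult_le_compat_l; lra.
    - replace (Finite 0) with (Rbar_opp 0) by (simpl; f_equal; ring).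
      apply -> is_lim_seq_opp. exact HQ2.
    - exact HQ2. }
  replace c0 with (c0 + 0) by ring.
  apply is_lim_seq_ext with (fun d => A d + B d).
  { intros d. unfold A, B. rewrite Hsplit. ring. }
  apply is_lim_seq_plus'; auto.
Qed.
End H2.

Lemma pow_lim (S : nat -> R) (L p : R) :
  is_lim_seq (fun d => INR d * (S d - 1)) L ->
  is_lim_seq (fun d => INR d * (Rpower (S d) p - 1)) (p * L).
Proof.
  intros HL.
  destruct (rpow_quad p) as [K [HK0 HK]].
  assert (HS : is_lim_seq (fun d => S d - 1) 0).
  { apply is_lim_seq_ext_loc with (fun d => (INR d * (S d - 1)) * / INR d).
    { exists 1%nat. intros n Hn. apply (le_INR 1) in Hn. simpl in Hn. field. lra. }
    replace (Finite 0) with (Finite (L * 0)) by (f_equal; ring).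
    apply is_lim_seq_mult'. auto. apply inv_INR_lim. }
  assert (Hev : eventually (fun d => 1/2 <= S d <= 2)).
  { apply is_lim_seq_spec in HS. destruct (HS (mkposreal (1/2) ltac:(lra))) as [N HN].
    exists N. intros n Hn. specialize (HN n Hn). simpl in HN. rewrite Rminus_0_r in HN.
    apply Rabs_lt_between in HN. lra. }
  set (E := fun d => INR d * (Rpower (S d) p - 1 - p * (S d - 1))).
  assert (HE : is_lim_seq E 0).
  { apply is_lim_seq_le_le_loc with (fun d => - (K * (INR d * (S d - 1)) * (S d - 1))) (fun d => K * (INR d * (S d - 1)) * (S d - 1)).
    - destruct Hev as [N HN]. exists N. intros n Hn. specialize (HN n Hn).
      specialize (HK (S n) HN). pose proof (pos_INR n).
      unfold E. apply Rabs_le_between. rewrite Rabs_mult, Rabs_pos_eq by lra.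
      replace (K * (INR n * (S n - 1)) * (S n - 1)) with (INR n * (K * (S n - 1) ^ 2)) by ring.
      apply Rmult_le_compat_l; lra.
    - replace (Finite 0) with (Rbar_opp 0) by (simpl; f_equal; ring).
      apply -> is_lim_seq_opp.
      replace (Finite 0) with (Finite (K * L * 0)) by (f_equal; ring).
      apply is_lim_seq_mult'; auto. replace (K * L) with (K * L) by ring.
      apply (is_lim_seq_scal_l _ K L). auto.
    - replace (Finite 0) with (Finite (K * L * 0)) by (f_equal; ring).
      apply is_lim_seq_mult'; auto. apply (is_lim_seq_scal_l _ K L). auto. }
  replace (p * L) with (p * L + 0) by ring.
  apply is_lim_seq_ext with (fun d => p * (INR d * (S d - 1)) + E d).
  { intros d. unfold E. ring. }
  apply is_lim_seq_plus'; auto. apply (is_lim_seq_scal_l _ p L). auto.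
Qed.

Lemma sum_n_m_1 (a : nat -> R) d : sum_n_m a 1 d = sum_f_R0 (fun n => match n with O => 0 | _ => a n end) d.
Proof.
  induction d as [|k IH].
  - rewrite sum_n_m_zero by lia. reflexivity.
  - rewrite sum_n_Sm by lia. rewrite tech5, <- IH. reflexivity.
Qed.

Section Fin.
Variable s : R.
Hypothesis Hs : 0 < s <= 2.

Lemma I0_link d : (1 <= d)%nat -> Rpower (2 / INR d) (s / 2) * I0 s d = Eb d (Gf (s / 2) d).
Proof.
  intros Hd. unfold I0, Eb, SB. rewrite sum_n_m_1.
  rewrite <- Rmult_assoc, scal_sum.
  symmetry. unfold Rdiv at 1. rewrite Rmult_comm, scal_sum. symmetry.
  apply sum_eq. intros n Hn. destruct n as [|m].
  - simpl. ring.
  - unfold Gf, Phi, hh. unfold Rdiv. ring.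
Qed.

Lemma Eb_Gf_pos d : (1 <= d)%nat -> 0 < Eb d (Gf (s / 2) d).
Proof.
  intros Hd. assert (Hr : 0 < s / 2 <= 1) by lra.
  assert (HG : forall n, 0 <= Gf (s / 2) d n /\ (n <> 0%nat -> 0 < Gf (s / 2) d n)).
  { intros n. destruct n as [|m]. simpl. split. lra. intros H; now destruct H.
    assert (0 < Gf (s / 2) d (S m)).
    { unfold Gf, Phi. apply Rmult_lt_0_compat. apply Rpower_pos. apply Rmult_lt_0_compat. apply Rpower_pos.
      apply (hh_pos _ Hr). rewrite S_INR. pose proof (pos_INR m). lra. }
    split; auto; lra. }
  unfold Eb, SB. apply Rdiv_lt_0_compat; [| apply pow_lt; lra].
  destruct d as [|k]. lia. rewrite tech5.
  assert (0 <= sum_f_R0 (fun n => Binomial.C (S k) n * Gf (s / 2) (S k) n) k).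
  { apply cond_pos_sum. intros n. apply Rmult_le_pos. left; apply C_pos. apply HG. }
  assert (0 < Binomial.C (S k) (S k) * Gf (s / 2) (S k) (S k)).
  { apply Rmult_lt_0_compat. apply C_pos. apply HG. lia. }
  lra.
Qed.
End Fin.

Lemma sigma0_repr s d : 0 < s <= 2 -> (1 <= d)%nat ->
  sigma0 s d = Rpower (Eb d (Gf (s / 2) d)) (- (1 / s)) * (sqrt 2 / sqrt (INR d)).
Proof.
  intros Hs Hd. assert (HD : 1 <= INR d) by (apply (le_INR 1); auto).
  set (S := Eb d (Gf (s / 2) d)).
  assert (HS : 0 < S) by (apply Eb_Gf_pos; auto).
  assert (HI : I0 s d = S * Rpower (INR d / 2) (s / 2)).
  { unfold S. rewrite <- I0_link by auto.
    rewrite Rmult_assoc, (Rmult_comm (I0 s d)), <- Rmult_assoc.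
    rewrite Rpower_mult_distr by (try apply Rdiv_lt_0_compat; lra).
    replace (2 / INR d * (INR d / 2)) with 1 by (field; lra). rewrite Rpower_1base. ring. }
  unfold sigma0. rewrite HI.
  assert (HP : 0 < Rpower (INR d / 2) (s / 2)) by apply Rpower_pos.
  rewrite <- Rpower_mult_distr by auto. f_equal.
  rewrite Rpower_mult. replace (s / 2 * - (1 / s)) with (- / 2) by (field; lra).
  rewrite Rpower_Ropp, Rpower_sqrt by lra. rewrite sqrt_div_alt by lra.
  assert (0 < sqrt (INR d)) by (apply sqrt_lt_R0; lra).
  assert (0 < sqrt 2) by (apply sqrt_lt_R0; lra).
  field. split; lra.
Qed.

Theorem mainTheorem2 (s : R) (hs0 : 0 < s) (hs2 : s <= 2) :
  is_lim_seq (fun d : nat =>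
      (sigma0 s d ^ 2 - (2 / INR d + 5 * (2 - s) / (2 * INR d ^ 2)))
        / (1 / INR d ^ 2)) 0
  /\
  is_lim_seq (fun d : nat =>
      (sigma0 s d - (sqrt 2 / sqrt (INR d)
                     + 5 * sqrt 2 * (2 - s) / (8 * INR d * sqrt (INR d))))
        / (1 / (INR d * sqrt (INR d)))) 0.
Proof.
  assert (Hr : 0 < s / 2 <= 1) by lra.
  set (S := fun d => Eb d (Gf (s / 2) d)).
  set (L := 2 * (s / 2) * bb (s / 2) + q2 (s / 2)).
  assert (HL : is_lim_seq (fun d => INR d * (S d - 1)) L) by (apply S_lim; auto).
  assert (Hev : eventually (fun d => 1 <= INR d /\ (1 <= d)%nat)).
  { exists 1%nat. intros n Hn. split; auto. apply (le_INR 1) in Hn. simpl in Hn. lra. }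
  split.
  - assert (H1 := pow_lim S L (- (1 / s) * 2) HL).
    apply is_lim_seq_ext_loc with (fun d => 2 * (INR d * (Rpower (S d) (- (1 / s) * 2) - 1)) - 5 * (2 - s) / 2).
    + destruct Hev as [N HN]. exists N. intros n Hn. destruct (HN n Hn) as [HD Hd].
      rewrite sigma0_repr by (auto; lra). fold (S n).
      assert (HS : 0 < S n) by (apply Eb_Gf_pos; auto; lra).
      assert (HV : Rpower (S n) (- (1 / s) * 2) = Rpower (S n) (- (1 / s)) ^ 2).
      { rewrite <- Rpower_mult. replace 2 with (INR 2) at 1 by (simpl; ring). apply Rpower_pow. apply Rpower_pos. }
      rewrite HV. set (V := Rpower (S n) (- (1 / s))).
      assert (Hs2 : sqrt 2 * sqrt 2 = 2) by (apply sqrt_sqrt; lra).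
      assert (HsD : sqrt (INR n) * sqrt (INR n) = INR n) by (apply sqrt_sqrt; lra).
      assert (0 < sqrt (INR n)) by (apply sqrt_lt_R0; lra).
      replace ((V * (sqrt 2 / sqrt (INR n))) ^ 2) with (V ^ 2 * (sqrt 2 * sqrt 2) / (sqrt (INR n) * sqrt (INR n))) by (field; lra).
      rewrite Hs2, HsD.
      field. lra.
    + replace (Finite 0) with (Finite (2 * (- (1 / s) * 2 * L) - 5 * (2 - s) / 2)).
      2:{ f_equal. unfold L, bb, q2. field. lra. }
      apply is_lim_seq_minus'. apply (is_lim_seq_scal_l _ 2 (- (1 / s) * 2 * L)). auto. apply is_lim_seq_const.
  - assert (H1 := pow_lim S L (- (1 / s)) HL).
    apply is_lim_seq_ext_loc with (fun d => sqrt 2 * (INR d * (Rpower (S d) (- (1 / s)) - 1)) - 5 * sqrt 2 * (2 - s) / 8).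
    + destruct Hev as [N HN]. exists N. intros n Hn. destruct (HN n Hn) as [HD Hd].
      rewrite sigma0_repr by (auto; lra). fold (S n).
      assert (0 < sqrt (INR n)) by (apply sqrt_lt_R0; lra).
      assert (HsD : sqrt (INR n) * sqrt (INR n) = INR n) by (apply sqrt_sqrt; lra).
      field. split; lra.
    + replace (Finite 0) with (Finite (sqrt 2 * (- (1 / s) * L) - 5 * sqrt 2 * (2 - s) / 8)).
      2:{ f_equal. unfold L, bb, q2. field. lra. }
      apply is_lim_seq_minus'. apply (is_lim_seq_scal_l _ (sqrt 2) (- (1 / s) * L)). auto. apply is_lim_seq_const.
Qed.
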